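(* Let $F=L-N:X\to Y$ be of class $C^1$ and satisfy hypothesis (H). Let $u_0=u(z_0,t_0)\in X$, with $z_0\in H_Y$, $t_0\in\mathbb{R}$. Then $u_0$ is a critical point of $F$ (i.e. $DF(u_0):X\to Y$ is not invertible) if and only if $t_0$ is a critical point of the function $t\mapsto h(u(z_0,t))$, equivalently of $t\mapsto h^a(z_0,t)$.
   Context: Let $X,Y$ be real Hilbert spaces, $X$ densely included in $Y$, and let $L:X\subset Y\to Y$ be a self-adjoint operator, $X$ carrying the graph norm. Let $\lambda_p$ be a simple isolated eigenvalue of $L$ with eigenvector $\phi_p\in X$, $\|\phi_p\|_Y=1$. Let $V_X=V_Y=\langle\phi_p\rangle$ be its real span, $H_Y=\{y\in Y:\langle y,\phi_p\rangle_Y=0\}$, $H_X=X\cap H_Y$, and $P:Y\to H_Y$ the orthogonal projection. Let $N:Y\to Y$, $F=L-N:X\to Y$, and for $t\in\mathbb{R}$ let $PN_t:H_Y\to H_Y$, $PN_t(w)=PN(w+t\phi_p)$, and $PF_t:H_X\to H_Y$, $PF_t(w)=PF(w+t\phi_p)$. Hypothesis (H): there is $n\ge0$ such that every $PN_t$ is Lipschitz with constant $n$ independent of $t$, and $[-n,n]\cap\sigma(L)=\{\lambda_p\}$. Under (H) each $PF_t$ is a homeomorphism (a $C^1$ diffeomorphism if $F$ is $C^1$); for $z\in H_Y$, $t\in\mathbb{R}$ let $w(z,t)=(PF_t)^{-1}(z)$ and $u(z,t)=w(z,t)+t\phi_p$, so that $\{u(z,t):t\in\mathbb{R}\}=F^{-1}(z+V_Y)$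 is the fiber associated to $z$. The height function is $h:X\to\mathbb{R}$, $h(u)=\langle F(u),\phi_p\rangle_Y$, and the adapted height function is $h^a(z,t)=h(u(z,t))$, so that $F(u(z,t))=z+h^a(z,t)\phi_p$. *)

(* Defs.v *)
From Stdlib Require Import Reals Lra ClassicalEpsilon.
Open Scope R_scope.
Set Implicit Arguments.

Record RHilbert := {
  hcar :> Type;
  hzero : hcar;
  hadd : hcar -> hcar -> hcar;
  hopp : hcar -> hcar;
  hscal : R -> hcar -> hcar;
  hinner : hcar -> hcar -> R;
  hadd_assoc : forall x y z, hadd x (hadd y z) = hadd (hadd x y) z;
  hadd_comm : forall x y, hadd x y = hadd y x;
  hadd_zero : forall x, hadd x hzero = x;
  hadd_opp : forall x, hadd x (hopp x) = hzero;
  hscal_one : forall x, hscal 1 x = x;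
  hscal_assoc : forall a b x, hscal a (hscal b x) = hscal (a * b) x;
  hscal_distr_l : forall a x y, hscal a (hadd x y) = hadd (hscal a x) (hscal a y);
  hscal_distr_r : forall a b x, hscal (a + b) x = hadd (hscal a x) (hscal b x);
  hinner_sym : forall x y, hinner x y = hinner y x;
  hinner_add : forall x y z, hinner (hadd x y) z = hinner x z + hinner y z;
  hinner_scal : forall a x y, hinner (hscal a x) y = a * hinner x y;
  hinner_pos : forall x, 0 <= hinner x x;
  hinner_def : forall x, hinner x x = 0 -> x = hzero;
  hcomplete : forall u : nat -> hcar,
    (forall eps, eps > 0 -> exists N : nat, forall m k, (N <= m)%nat -> (N <= k)%nat ->
        sqrt (hinner (hadd (u m) (hopp (u k))) (hadd (u m) (hopp (u k)))) < eps) ->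
    exists l, forall eps, eps > 0 -> exists N : nat, forall m, (N <= m)%nat ->
        sqrt (hinner (hadd (u m) (hopp l)) (hadd (u m) (hopp l))) < eps
}.

Arguments hzero {_}.
Arguments hadd {_}.
Arguments hopp {_}.
Arguments hscal {_}.
Arguments hinner {_}.

Section Ops.
Context {Y : RHilbert}.

Definition hsub (x y : Y) : Y := hadd x (hopp y).
Definition hnorm (x : Y) : R := sqrt (hinner x x).

(** The domain X of L is modelled as a predicate D on Y (X ⊂ Y),
    and L : Y -> Y is only meaningful on D. *)
Definition subspace (D : Y -> Prop) : Prop :=
  D hzero /\ (forall x y, D x -> D y -> D (hadd x y)) /\
  (forall a x, D x -> D (hscal a x)).

Definition dense (D : Y -> Prop) : Prop :=
  forall y eps, eps > 0 -> exists x, D x /\ hnorm (hsub x y) < eps.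

Definition linear_on (D : Y -> Prop) (f : Y -> Y) : Prop :=
  (forall x y, D x -> D y -> f (hadd x y) = hadd (f x) (f y)) /\
  (forall a x, D x -> f (hscal a x) = hscal a (f x)).

Definition self_adjoint (D : Y -> Prop) (L : Y -> Y) : Prop :=
  subspace D /\ dense D /\ linear_on D L /\
  (forall x y, D x -> D y -> hinner (L x) y = hinner x (L y)) /\
  (forall y z, (forall x, D x -> hinner (L x) y = hinner x z) -> D y /\ L y = z).

Definition gnorm (L : Y -> Y) (x : Y) : R :=
  sqrt (hinner x x + hinner (L x) (L x)).

Definition in_resolvent (D : Y -> Prop) (L : Y -> Y) (mu : R) : Prop :=
  exists Rinv : Y -> Y,
    linear_on (fun _ => True) Rinv /\
    (exists C, forall y, hnorm (Rinv y) <= C * hnorm y) /\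
    (forall y, D (Rinv y) /\ hsub (L (Rinv y)) (hscal mu (Rinv y)) = y) /\
    (forall x, D x -> Rinv (hsub (L x) (hscal mu x)) = x).

Definition in_spectrum (D : Y -> Prop) (L : Y -> Y) (mu : R) : Prop :=
  ~ in_resolvent D L mu.

Definition simple_isolated_eigenvalue (D : Y -> Prop) (L : Y -> Y) (lam : R) (phi : Y) : Prop :=
  D phi /\ hnorm phi = 1 /\ L phi = hscal lam phi /\
  (forall x, D x -> L x = hscal lam x -> exists c, x = hscal c phi) /\
  (exists eps, eps > 0 /\ forall mu, mu <> lam -> Rabs (mu - lam) < eps -> in_resolvent D L mu).

Definition HY (phi y : Y) : Prop := hinner y phi = 0.
Definition Pproj (phi y : Y) : Y := hsub y (hscal (hinner y phi) phi).

Definition shift (phi : Y) (t : R) (w : Y) : Y := hadd w (hscal t phi).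

Definition hypH (D : Y -> Prop) (L N : Y -> Y) (phi : Y) (lam n : R) : Prop :=
  0 <= n /\
  (forall t w1 w2, HY phi w1 -> HY phi w2 ->
     hnorm (hsub (Pproj phi (N (shift phi t w1))) (Pproj phi (N (shift phi t w2))))
       <= n * hnorm (hsub w1 w2)) /\
  (-n <= lam <= n /\ in_spectrum D L lam) /\
  (forall mu, -n <= mu <= n -> in_spectrum D L mu -> mu = lam).

Definition Fmap (L N : Y -> Y) (u : Y) : Y := hsub (L u) (N u).

Definition is_C1 (D : Y -> Prop) (L : Y -> Y) (F : Y -> Y) (DF : Y -> Y -> Y) : Prop :=
  (forall u, D u -> linear_on D (DF u) /\
     exists C, forall h, D h -> hnorm (DF u h) <= C * gnorm L h) /\
  (forall u, D u -> forall eps, eps > 0 -> exists delta, delta > 0 /\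
     forall h, D h -> gnorm L h < delta ->
       hnorm (hsub (hsub (F (hadd u h)) (F u)) (DF u h)) <= eps * gnorm L h) /\
  (forall u, D u -> forall eps, eps > 0 -> exists delta, delta > 0 /\
     forall u', D u' -> gnorm L (hsub u' u) < delta ->
       forall h, D h -> hnorm (hsub (DF u' h) (DF u h)) <= eps * gnorm L h).

Definition invertible_op (D : Y -> Prop) (L : Y -> Y) (A : Y -> Y) : Prop :=
  exists G : Y -> Y,
    (forall y, D (G y) /\ A (G y) = y) /\
    (forall x, D x -> G (A x) = x) /\
    (exists C, forall y, gnorm L (G y) <= C * hnorm y).

(** w(z,t) = (PF_t)^{-1}(z) and u(z,t) = w(z,t) + t phi. *)
Definition fiber_w (D : Y -> Prop) (L N : Y -> Y) (phi z : Y) (t : R) : Y :=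
  epsilon (inhabits hzero)
    (fun w => D w /\ HY phi w /\ Pproj phi (Fmap L N (shift phi t w)) = z).

Definition fiber_u (D : Y -> Prop) (L N : Y -> Y) (phi z : Y) (t : R) : Y :=
  shift phi t (fiber_w D L N phi z t).

Definition height (L N : Y -> Y) (phi u : Y) : R := hinner (Fmap L N u) phi.

Definition adapted_height (D : Y -> Prop) (L N : Y -> Y) (phi z : Y) (t : R) : R :=
  height L N phi (fiber_u D L N phi z t).

End Ops.

(* Main.v *)
Require Import Defs.
From Stdlib Require Import Reals Lra Lia ClassicalEpsilon Classical.
Open Scope R_scope.


Section Basic.
Context {Y : RHilbert}.
Implicit Types x y z w : Y.

Lemma hinner_opp_l x z : hinner (hopp x) z = - hinner x z.
Proof.
  assert (H := hinner_add Y x (hopp x) z). rewrite hadd_opp in H.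
  assert (H0 : hinner (@hzero Y) z = 0).
  { assert (H1 := hinner_scal Y 0 hzero z).
    assert (E: hscal 0 (@hzero Y) = hzero).
    { assert (E1 := hscal_distr_r Y 0 0 (@hzero Y)). rewrite Rplus_0_r in E1.
      assert (E2 := f_equal (fun v => hadd v (hopp (hscal 0 (@hzero Y)))) E1).
      simpl in E2. rewrite hadd_opp, <- hadd_assoc, hadd_opp, hadd_zero in E2. auto. }
    rewrite E in H1. lra. }
  lra.
Qed.

Lemma hinner_zero_l z : hinner (@hzero Y) z = 0.
Proof.
  rewrite <- (hadd_opp Y z). rewrite hinner_add, hinner_opp_l. ring.
Qed.

Lemma hinner_sub_l x y z : hinner (hsub x y) z = hinner x z - hinner y z.
Proof. unfold hsub. rewrite hinner_add, hinner_opp_l. ring. Qed.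

Lemma hinner_add_r x y z : hinner z (hadd x y) = hinner z x + hinner z y.
Proof. rewrite !(hinner_sym Y z). apply hinner_add. Qed.
Lemma hinner_scal_r a x z : hinner z (hscal a x) = a * hinner z x.
Proof. rewrite !(hinner_sym Y z). apply hinner_scal. Qed.
Lemma hinner_opp_r x z : hinner z (hopp x) = - hinner z x.
Proof. rewrite !(hinner_sym Y z). apply hinner_opp_l. Qed.
Lemma hinner_sub_r x y z : hinner z (hsub x y) = hinner z x - hinner z y.
Proof. rewrite !(hinner_sym Y z). apply hinner_sub_l. Qed.
Lemma hinner_zero_r z : hinner z (@hzero Y) = 0.
Proof. rewrite hinner_sym. apply hinner_zero_l. Qed.

Lemma hext x y : (forall z, hinner x z = hinner y z) -> x = y.
Proof.
  intro H. assert (E: hinner (hsub x y) (hsub x y) = 0).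
  { rewrite hinner_sub_l, !H. ring. }
  apply hinner_def in E.
  assert (E2 := f_equal (fun v => hadd v y) E). simpl in E2.
  unfold hsub in E2. rewrite <- hadd_assoc, (hadd_comm Y (hopp y)), hadd_opp, !hadd_zero in E2.
  rewrite (hadd_comm Y hzero), hadd_zero in E2. auto.
Qed.

End Basic.

Global Hint Rewrite @hinner_add @hinner_scal @hinner_opp_l @hinner_sub_l @hinner_zero_l : hin.
Global Hint Rewrite @hinner_add_r @hinner_scal_r @hinner_opp_r @hinner_sub_r @hinner_zero_r : hinr.
Ltac veq := apply hext; let z := fresh "z" in intro z; autorewrite with hin; try ring.


Lemma discr a b c : 0 <= c -> (forall s, 0 <= a + 2 * b * s + c * s * s) -> b * b <= a * c.
Proof.
  intros Hc H.
  destruct (Req_dec c 0) as [E|E].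
  - subst. destruct (Req_dec b 0) as [Eb|Eb]. subst; specialize (H 0); nra.
    specialize (H (-(a+1)/(2*b))).
    replace (a + 2 * b * (- (a + 1) / (2 * b)) + 0 * (- (a + 1) / (2 * b)) * (- (a + 1) / (2 * b))) with (-1) in H by (field; auto). lra.
  - specialize (H (-b/c)). assert (0 < c) by lra.
    replace (a + 2*b*(-b/c) + c*(-b/c)*(-b/c)) with ((a*c - b*b)/c) in H by (field; auto).
    assert (0 <= (a*c-b*b)/c * c) by (apply Rmult_le_pos; lra).
    replace ((a*c-b*b)/c * c) with (a*c-b*b) in H1 by (field; auto). lra.
Qed.

Lemma Rabs_def2b a b : Rabs a <= b -> -b <= a /\ a <= b.
Proof. unfold Rabs. destruct (Rcase_abs a); lra. Qed.

Section Norms.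
Context {Y : RHilbert}.
Implicit Types x y z w : Y.

Lemma nsq_ge0 x : 0 <= hinner x x. Proof. apply hinner_pos. Qed.
Lemma hnorm_ge0 x : 0 <= hnorm x. Proof. apply sqrt_pos. Qed.
Lemma hnorm_sq x : hnorm x * hnorm x = hinner x x.
Proof. unfold hnorm. apply sqrt_sqrt, hinner_pos. Qed.

Lemma CS2 x y : hinner x y * hinner x y <= hinner x x * hinner y y.
Proof.
  apply discr. apply hinner_pos. intro s.
  assert (H := hinner_pos Y (hadd x (hscal s y))).
  autorewrite with hin in H. rewrite !hinner_add_r, !hinner_scal_r in H.
  rewrite (hinner_sym Y y x) in H. nra.
Qed.

Lemma sq_le_norm a b : 0 <= b -> a * a <= b * b -> a <= b.
Proof. intros. nra. Qed.
Lemma abs_sq_le a b : 0 <= b -> a * a <= b * b -> Rabs a <= b.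
Proof. intros. apply Rabs_le. nra. Qed.

Lemma CS x y : Rabs (hinner x y) <= hnorm x * hnorm y.
Proof.
  apply abs_sq_le. apply Rmult_le_pos; apply hnorm_ge0.
  replace (hnorm x * hnorm y * (hnorm x * hnorm y)) with ((hnorm x * hnorm x) * (hnorm y * hnorm y)) by ring.
  rewrite !hnorm_sq. apply CS2.
Qed.
Lemma CS' x y : hinner x y <= hnorm x * hnorm y.
Proof. eapply Rle_trans. apply Rle_abs. apply CS. Qed.

Lemma hnorm_scal a x : hnorm (hscal a x) = Rabs a * hnorm x.
Proof.
  unfold hnorm. rewrite hinner_scal, hinner_scal_r, <- Rmult_assoc.
  rewrite sqrt_mult_alt. f_equal. replace (a*a) with (Rabs a * Rabs a). rewrite sqrt_square; auto. apply Rabs_pos.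
  rewrite <- Rabs_mult. apply Rabs_pos_eq. nra. nra.
Qed.

Lemma hnorm_add x y : hnorm (hadd x y) <= hnorm x + hnorm y.
Proof.
  apply sq_le_norm. pose proof (hnorm_ge0 x). pose proof (hnorm_ge0 y). lra.
  rewrite hnorm_sq. autorewrite with hin. rewrite !hinner_add_r.
  replace ((hnorm x + hnorm y) * (hnorm x + hnorm y)) with
   (hnorm x * hnorm x + hnorm y * hnorm y + 2 * (hnorm x * hnorm y)) by ring.
  rewrite !hnorm_sq. rewrite (hinner_sym Y y x). pose proof (CS' x y). lra.
Qed.

Lemma hnorm_opp x : hnorm (hopp x) = hnorm x.
Proof. unfold hnorm. rewrite hinner_opp_l, hinner_opp_r. f_equal. ring. Qed.

Lemma hnorm_sub x y : hnorm (hsub x y) <= hnorm x + hnorm y.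
Proof. unfold hsub. rewrite <- (hnorm_opp y). apply hnorm_add. Qed.

Lemma hnorm_sub_sym x y : hnorm (hsub x y) = hnorm (hsub y x).
Proof. unfold hnorm. f_equal. autorewrite with hin. rewrite !hinner_sub_r. rewrite (hinner_sym Y x y). ring. Qed.

Lemma hnorm_rev x y : hnorm x - hnorm y <= hnorm (hsub x y).
Proof.
  assert (E : x = hadd (hsub x y) y) by (veq).
  pose proof (hnorm_add (hsub x y) y). rewrite <- E in H. lra.
Qed.

Lemma hnorm_zero_eq x : hnorm x = 0 -> x = hzero.
Proof. intro H. apply hinner_def. rewrite <- hnorm_sq, H. ring. Qed.

Lemma hnorm_zero : hnorm (@hzero Y) = 0.
Proof. unfold hnorm. rewrite hinner_zero_l. apply sqrt_0. Qed.

Lemma hsub_diag x : hsub x x = hzero.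
Proof. veq. Qed.

Lemma hnorm_tri x y z : hnorm (hsub x z) <= hnorm (hsub x y) + hnorm (hsub y z).
Proof.
  replace (hsub x z) with (hadd (hsub x y) (hsub y z)) by veq. apply hnorm_add.
Qed.

Lemma hnorm_eq_inner_sqrt x : hnorm x = sqrt (hinner x x). Proof. reflexivity. Qed.

Lemma hsub_eq0 x y : hsub x y = hzero -> x = y.
Proof. intro H. apply hext. intro z. assert (E := f_equal (fun v => hinner v z) H). simpl in E.
  rewrite hinner_sub_l, hinner_zero_l in E. lra. Qed.

Lemma hnorm_sub_eq0 x y : hnorm (hsub x y) = 0 -> x = y.
Proof. intro. apply hsub_eq0, hnorm_zero_eq; auto. Qed.

End Norms.


Section Seq.
Context {Y : RHilbert}.
Implicit Types x y z w : Y.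

Definition cvY (u : nat -> Y) (l : Y) : Prop :=
  forall eps, eps > 0 -> exists N : nat, forall m, (N <= m)%nat -> hnorm (hsub (u m) l) < eps.
Definition cauchyY (u : nat -> Y) : Prop :=
  forall eps, eps > 0 -> exists N : nat, forall m k, (N <= m)%nat -> (N <= k)%nat -> hnorm (hsub (u m) (u k)) < eps.

Lemma complete_Y u : cauchyY u -> exists l, cvY u l.
Proof. intro H. apply (hcomplete Y u H). Qed.



Lemma cvY_unique u l1 l2 : cvY u l1 -> cvY u l2 -> l1 = l2.
Proof.
  intros H1 H2. apply hnorm_sub_eq0. apply Rle_antisym; [|apply hnorm_ge0].
  apply Rnot_lt_le. intro Hp. set (e := hnorm (hsub l1 l2)) in *.
  destruct (H1 (e/2)) as [N1 HN1]. lra. destruct (H2 (e/2)) as [N2 HN2]. lra.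
  specialize (HN1 (max N1 N2) ltac:(lia)). specialize (HN2 (max N1 N2) ltac:(lia)).
  pose proof (hnorm_tri l1 (u (max N1 N2)) l2). rewrite (hnorm_sub_sym l1 (u _)) in H. unfold e in *. lra.
Qed.

Lemma cvY_cauchy u l : cvY u l -> cauchyY u.
Proof.
  intros H e He. destruct (H (e/2)) as [N HN]. lra. exists N. intros m k Hm Hk.
  pose proof (hnorm_tri (u m) l (u k)). pose proof (HN m Hm). specialize (HN k Hk).
  rewrite (hnorm_sub_sym l) in H0. lra.
Qed.

Lemma cvY_lip (T : Y -> Y) C u l : (forall a b, hnorm (hsub (T a) (T b)) <= C * hnorm (hsub a b)) ->
  cvY u l -> cvY (fun m => T (u m)) (T l).
Proof.
  intros HT H e He. destruct (H (e / (Rabs C + 1))) as [N HN].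
  apply Rdiv_lt_0_compat; auto. pose proof (Rabs_pos C); lra.
  exists N. intros m Hm. specialize (HN m Hm).
  eapply Rle_lt_trans. apply HT. pose proof (hnorm_ge0 (hsub (u m) l)).
  assert (C * hnorm (hsub (u m) l) <= (Rabs C + 1) * hnorm (hsub (u m) l)).
  { apply Rmult_le_compat_r; auto. pose proof (Rle_abs C); lra. }
  assert ((Rabs C + 1) * hnorm (hsub (u m) l) < (Rabs C+1) * (e / (Rabs C + 1))).
  { apply Rmult_lt_compat_l; auto. pose proof (Rabs_pos C); lra. }
  replace ((Rabs C+1) * (e / (Rabs C + 1))) with e in H2 by (field; pose proof (Rabs_pos C); lra). lra.
Qed.

Lemma cvY_shift u l k : cvY u l -> cvY (fun m => u (m + k)%nat) l.
Proof. intros H e He. destruct (H e He) as [N HN]. exists N. intros. apply HN. lia. Qed.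

Lemma cvY_ext u v l : (forall m, u m = v m) -> cvY u l -> cvY v l.
Proof. intros E H e He. destruct (H e He) as [N HN]. exists N. intros. rewrite <- E. auto. Qed.

Lemma cvY_inner u l z : cvY u l -> forall e, e > 0 -> exists N, forall m, (N <= m)%nat ->
   Rabs (hinner (u m) z - hinner l z) < e.
Proof.
  intros H e He. destruct (H (e / (hnorm z + 1))) as [N HN].
  apply Rdiv_lt_0_compat; auto. pose proof (hnorm_ge0 z); lra.
  exists N. intros m Hm. rewrite <- hinner_sub_l. eapply Rle_lt_trans. apply CS.
  specialize (HN m Hm). pose proof (hnorm_ge0 z). pose proof (hnorm_ge0 (hsub (u m) l)).
  apply Rle_lt_trans with (hnorm (hsub (u m) l) * (hnorm z + 1)). nra.
  replace e with ((e / (hnorm z + 1)) * (hnorm z + 1)) by (field; lra).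
  apply Rmult_lt_compat_r; lra.
Qed.

Lemma cvY_norm_le u l c : cvY u l -> (forall m, hnorm (u m) <= c) -> hnorm l <= c.
Proof.
  intros H Hb. apply Rnot_lt_le. intro Hc.
  destruct (H (hnorm l - c)) as [N HN]. lra. specialize (HN N (le_n _)).
  pose proof (hnorm_rev l (u N)). rewrite hnorm_sub_sym in HN. specialize (Hb N). lra.
Qed.

Lemma cvY_inner_eq u l z r : cvY u l -> (forall m, hinner (u m) z = r) -> hinner l z = r.
Proof.
  intros H Hr. apply Rle_antisym; apply Rnot_lt_le; intro Hc.
  - destruct (cvY_inner u l z H (hinner l z - r)) as [N HN]. lra. specialize (HN N (le_n _)).
    rewrite Hr in HN. apply Rabs_def2 in HN. lra.
  - destruct (cvY_inner u l z H (r - hinner l z)) as [N HN]. lra. specialize (HN N (le_n _)).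
    rewrite Hr in HN. apply Rabs_def2 in HN. lra.
Qed.

Definition closedP (S : Y -> Prop) := forall u l, (forall m, S (u m)) -> cvY u l -> S l.

Lemma geom_bound (u : nat -> Y) q c : 0 <= q < 1 ->
  (forall m, hnorm (hsub (u (S m)) (u m)) <= c * q ^ m) ->
  forall m k, hnorm (hsub (u (m + k)%nat) (u m)) <= c * q ^ m * (1 - q ^ k) / (1 - q).
Proof.
  intros Hq H m k. induction k.
  - rewrite Nat.add_0_r, hsub_diag, hnorm_zero. simpl. replace (c * q ^ m * (1 - 1) / (1 - q)) with 0 by (field; lra). lra.
  - replace (m + S k)%nat with (S (m + k)) by lia.
    eapply Rle_trans. apply (hnorm_tri _ (u (m+k)%nat)).
    eapply Rle_trans. apply Rplus_le_compat. apply H. apply IHk.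
    rewrite pow_add. simpl. apply Req_le. field. lra.
Qed.

Lemma banach_fp (Sset : Y -> Prop) (Phi : Y -> Y) q x0 :
  closedP Sset -> Sset x0 -> (forall x, Sset x -> Sset (Phi x)) -> 0 <= q < 1 ->
  (forall x y, Sset x -> Sset y -> hnorm (hsub (Phi x) (Phi y)) <= q * hnorm (hsub x y)) ->
  exists x, Sset x /\ Phi x = x.
Proof.
  intros HS H0 HPhi Hq Hc.
  set (u := fun m => Nat.iter m Phi x0).
  assert (Su : forall m, Sset (u m)) by (induction m; simpl; auto).
  set (c := hnorm (hsub (u 1%nat) (u 0%nat))).
  assert (Hstep : forall m, hnorm (hsub (u (S m)) (u m)) <= c * q ^ m).
  { induction m. simpl. unfold c; simpl. lra.
    change (u (S (S m))) with (Phi (u (S m))). change (u (S m)) with (Phi (u m)) at 2.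
    eapply Rle_trans. apply Hc; auto. change (q ^ S m) with (q * q ^ m).
    replace (c * (q * q ^ m)) with (q * (c * q ^ m)) by ring. apply Rmult_le_compat_l; lra. }
  assert (Hc0 : 0 <= c) by apply hnorm_ge0.
  assert (Cau : cauchyY u).
  { intros e He. destruct (pow_lt_1_zero q ltac:(rewrite Rabs_pos_eq; lra) (e * (1-q) / (c+1))) as [N HN].
    apply Rdiv_lt_0_compat; [apply Rmult_lt_0_compat|]; lra.
    exists N. intros m k Hm Hk.
    assert (G : forall a b, (N <= a)%nat -> (a <= b)%nat -> hnorm (hsub (u b) (u a)) < e).
    { intros a b Ha Hb. replace b with (a + (b - a))%nat by lia.
      eapply Rle_lt_trans. apply (geom_bound u q c Hq Hstep).
      specialize (HN a Ha). rewrite Rabs_pos_eq in HN by (apply pow_le; lra).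
      assert (0 <= q ^ (b-a)) by (apply pow_le; lra).
      assert (q ^ (b - a) <= 1) by (rewrite <- (pow1 (b-a)); apply pow_incr; lra).
      assert (0 <= q ^ a) by (apply pow_le; lra).
      apply Rle_lt_trans with (c * q ^ a / (1 - q)).
      { unfold Rdiv. rewrite !Rmult_assoc. apply Rmult_le_compat_l; auto. apply Rmult_le_compat_l; auto.
        rewrite <- (Rmult_1_l (/ (1-q))) at 2. apply Rmult_le_compat_r. apply Rlt_le, Rinv_0_lt_compat; lra. lra. }
      apply Rle_lt_trans with ((c+1) * q ^ a / (1 - q)).
      { unfold Rdiv. apply Rmult_le_compat_r. apply Rlt_le, Rinv_0_lt_compat; lra. nra. }
      replace e with ((c+1) * (e * (1 - q) / (c + 1)) / (1-q)) by (field; lra).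
      unfold Rdiv. apply Rmult_lt_compat_r. apply Rinv_0_lt_compat; lra.
      apply Rmult_lt_compat_l; lra. }
    destruct (Nat.le_ge_cases m k).
    - rewrite hnorm_sub_sym. auto.
    - auto. }
  destruct (complete_Y u Cau) as [l Hl].
  exists l. split. apply (HS u l Su Hl).
  assert (H1 : cvY (fun m => u (m + 1)%nat) l) by (apply cvY_shift; auto).
  assert (H2 : cvY (fun m => Phi (u m)) (Phi l)).
  { intros e He. destruct (Hl (e / (q + 1))) as [N HN]. apply Rdiv_lt_0_compat; lra.
    exists N. intros m Hm. eapply Rle_lt_trans. apply Hc; auto. apply (HS u l Su Hl).
    specialize (HN m Hm). pose proof (hnorm_ge0 (hsub (u m) l)).
    apply Rle_lt_trans with ((q+1) * hnorm (hsub (u m) l)). nra.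
    replace e with ((q+1) * (e/(q+1))) by (field; lra). apply Rmult_lt_compat_l; lra. }
  apply (cvY_unique (fun m => Phi (u m))). auto.
  eapply cvY_ext; [|exact H1]. intro m. simpl. replace (m+1)%nat with (S m) by lia. reflexivity.
Qed.

End Seq.


Section Ops.
Context {Y : RHilbert}.
Implicit Types x y z w : Y.

Definition lin (T : Y -> Y) : Prop :=
  (forall x y, T (hadd x y) = hadd (T x) (T y)) /\ (forall a x, T (hscal a x) = hscal a (T x)).
Definition sa (T : Y -> Y) : Prop := forall x y, hinner (T x) y = hinner x (T y).
Definition bndc (T : Y -> Y) (C : R) : Prop := forall x, hnorm (T x) <= C * hnorm x.

Lemma hscal_zero_l x : hscal 0 x = @hzero Y. Proof. veq. Qed.
Lemma hopp_scal x : hopp x = hscal (-1) x. Proof. veq. Qed.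

Lemma lin_zero T : lin T -> T hzero = hzero.
Proof. intros [_ H]. rewrite <- (hscal_zero_l hzero), H. rewrite !hscal_zero_l. reflexivity. Qed.
Lemma lin_sub T x y : lin T -> T (hsub x y) = hsub (T x) (T y).
Proof. intros [H1 H2]. unfold hsub. rewrite H1, !hopp_scal, H2. reflexivity. Qed.
Lemma lin_opp T x : lin T -> T (hopp x) = hopp (T x).
Proof. intros [H1 H2]. rewrite !hopp_scal, H2. reflexivity. Qed.

Lemma bnd_lip T C x y : lin T -> bndc T C -> hnorm (hsub (T x) (T y)) <= C * hnorm (hsub x y).
Proof. intros HL HB. rewrite <- lin_sub; auto. Qed.

Lemma bnd_C_nonneg T C x : bndc T C -> hnorm x = 1 -> 0 <= C.
Proof. intros H Hx. specialize (H x). rewrite Hx in H. pose proof (hnorm_ge0 (T x)). lra. Qed.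

(* polarization bound *)
Lemma quad_bound T m : lin T -> sa T -> 0 <= m ->
  (forall x, Rabs (hinner (T x) x) <= m * hinner x x) -> bndc T m.
Proof.
  intros HL HS Hm H x.
  assert (P : forall u v, 4 * hinner (T u) v <= 2 * m * (hinner u u + hinner v v)).
  { intros u v. pose proof (H (hadd u v)) as H1. pose proof (H (hsub u v)) as H2.
    destruct HL as [La Ls].
    rewrite La in H1. rewrite (lin_sub T u v) in H2 by (split; auto).
    apply Rabs_def2b in H1. apply Rabs_def2b in H2.
    autorewrite with hin hinr in H1, H2.
    rewrite (HS v u) in H1, H2. rewrite (hinner_sym Y v u) in H1, H2. rewrite (hinner_sym Y v (T u)) in H1, H2. lra. }
  destruct (Req_dec (hnorm (T x)) 0) as [E|E].
  - rewrite E. apply Rmult_le_pos; auto. apply hnorm_ge0.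
  - pose proof (hnorm_ge0 (T x)) as G0. pose proof (hnorm_ge0 x) as G1.
    set (s := hnorm x / hnorm (T x)).
    specialize (P x (hscal s (T x))). rewrite hinner_scal_r, hinner_scal, hinner_scal_r in P.
    rewrite <- !hnorm_sq in P. unfold s in P.
    assert (Hp : 0 < hnorm (T x)) by lra.
    replace (hnorm x / hnorm (T x) * (hnorm (T x) * hnorm (T x))) with (hnorm x * hnorm (T x)) in P by (field; lra).
    replace (hnorm x / hnorm (T x) * (hnorm x / hnorm (T x) * (hnorm (T x) * hnorm (T x)))) with (hnorm x * hnorm x) in P by (field; lra).
    destruct (Req_dec (hnorm x) 0) as [E2|E2].
    + apply hnorm_zero_eq in E2. subst. rewrite lin_zero in E; auto. rewrite hnorm_zero in E. lra.
    + assert (0 < hnorm x) by lra. replace (hnorm x / hnorm (T x) * (hnorm x * hnorm (T x))) with (hnorm x * hnorm x) in P by (field; lra). apply Rmult_le_reg_l with (4 * hnorm x). lra. nra.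
Qed.

Lemma gcs T x y : lin T -> sa T -> (forall z, 0 <= hinner (T z) z) ->
  hinner (T x) y * hinner (T x) y <= hinner (T x) x * hinner (T y) y.
Proof.
  intros HL HS Hp. apply discr. apply Hp. intro s.
  pose proof (Hp (hadd x (hscal s y))) as H. destruct HL as [La Ls].
  rewrite La, Ls in H. autorewrite with hin in H. rewrite !hinner_add_r, !hinner_scal_r in H.
  rewrite (HS y x), (hinner_sym Y y (T x)) in H. lra.
Qed.

Lemma gcs2 T b x : lin T -> sa T -> (forall z, 0 <= hinner (T z) z) -> bndc T b -> 0 <= b ->
  hinner (T x) (T x) <= b * hinner (T x) x.
Proof.
  intros HL HS Hp HB Hb.
  pose proof (gcs T x (T x) HL HS Hp) as G.
  assert (G2 : hinner (T (T x)) (T x) <= b * hinner (T x) (T x)).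
  { eapply Rle_trans. apply CS'. rewrite <- hnorm_sq.
    pose proof (HB (T x)). pose proof (hnorm_ge0 (T x)). pose proof (hnorm_ge0 (T (T x))). nra. }
  pose proof (Hp x). pose proof (nsq_ge0 (T x)).
  destruct (Req_dec (hinner (T x) (T x)) 0) as [E|E].
  - rewrite E. nra.
  - assert (0 < hinner (T x) (T x)) by lra. nra.
Qed.

Lemma sup_lemma T C (e0 : Y) : lin T -> sa T -> bndc T C -> hnorm e0 = 1 ->
  exists M, (forall x, hinner (T x) x <= M * hinner x x) /\ Rabs M <= C /\
    forall eps, eps > 0 -> exists x, hnorm x = 1 /\ hnorm (hsub (T x) (hscal M x)) < eps.
Proof.
  intros HL HS HB He0.
  assert (HC : 0 <= C) by (eapply bnd_C_nonneg; eauto).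
  assert (Hq : forall x, Rabs (hinner (T x) x) <= C * hinner x x).
  { intro x. eapply Rle_trans. apply CS. rewrite <- hnorm_sq. pose proof (HB x).
    pose proof (hnorm_ge0 x). pose proof (hnorm_ge0 (T x)). nra. }
  set (E := fun r => exists x, hnorm x = 1 /\ r = hinner (T x) x).
  assert (Eb : bound E).
  { exists C. intros r [x [Hx ->]]. specialize (Hq x). rewrite <- hnorm_sq, Hx in Hq.
    apply Rabs_def2b in Hq. lra. }
  destruct (completeness E Eb (ex_intro _ _ (ex_intro _ e0 (conj He0 eq_refl)))) as [M [HM1 HM2]].
  assert (Hunit : forall x, hnorm x <> 0 -> hnorm (hscal (/ hnorm x) x) = 1).
  { intros x Hx. rewrite hnorm_scal. rewrite Rabs_pos_eq. field; auto.
    apply Rlt_le, Rinv_0_lt_compat. pose proof (hnorm_ge0 x). lra. }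
  assert (Hup : forall x, hinner (T x) x <= M * hinner x x).
  { intro x. destruct (Req_dec (hnorm x) 0) as [Z|Z].
    - apply hnorm_zero_eq in Z. subst. rewrite lin_zero, !hinner_zero_l; auto. lra.
    - pose proof (HM1 _ (ex_intro _ _ (conj (Hunit x Z) eq_refl))) as G.
      destruct HL as [La Ls]. rewrite Ls, hinner_scal, hinner_scal_r in G.
      rewrite <- hnorm_sq. pose proof (hnorm_ge0 x).
      assert (0 < hnorm x) by lra.
      assert (G2 : / hnorm x * (/ hnorm x * hinner (T x) x) * (hnorm x * hnorm x) <= M * (hnorm x * hnorm x)).
      { apply Rmult_le_compat_r; auto. nra. }
      replace (/ hnorm x * (/ hnorm x * hinner (T x) x) * (hnorm x * hnorm x)) with (hinner (T x) x) in G2 by (field; lra). auto. }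
  assert (HMb : Rabs M <= C).
  { apply Rabs_le. split.
    - apply Rle_trans with (hinner (T e0) e0). specialize (Hq e0). rewrite <- hnorm_sq, He0 in Hq.
      apply Rabs_def2b in Hq. lra. apply HM1. exists e0; auto.
    - apply HM2. intros r [x [Hx ->]]. specialize (Hq x). rewrite <- hnorm_sq, Hx in Hq. apply Rabs_def2b in Hq. lra. }
  exists M. split; auto. split; auto.
  intros eps Heps.
  set (T' := fun x => hadd (T x) (hscal C x)).
  set (M' := M + C).
  assert (HM' : 0 <= M') by (unfold M'; apply Rabs_def2b in HMb; lra).
  assert (L' : lin T').
  { destruct HL as [La Ls]. split; intros; unfold T'; rewrite ?La, ?Ls; veq. }
  assert (S' : sa T').
  { intros x y. unfold T'. autorewrite with hin. rewrite hinner_add_r, hinner_scal_r, HS. rewrite (hinner_sym Y x y). ring. }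
  assert (Q' : forall x, T' x = hadd (T x) (hscal C x)) by reflexivity.
  assert (P' : forall z, 0 <= hinner (T' z) z).
  { intro z. rewrite Q'. autorewrite with hin. specialize (Hq z). apply Rabs_def2b in Hq. lra. }
  assert (B' : bndc T' M').
  { apply quad_bound; auto. intro x. rewrite Rabs_pos_eq by auto. rewrite Q'. autorewrite with hin.
    specialize (Hup x). unfold M'. lra. }
  set (eta := eps * eps / (M' + 1)).
  assert (Heta : 0 < eta) by (unfold eta; apply Rdiv_lt_0_compat; nra).
  assert (Hx : exists x, hnorm x = 1 /\ M - eta < hinner (T x) x).
  { apply NNPP. intro Hn. assert (M <= M - eta). apply HM2. intros r [x [Hx ->]].
    apply Rnot_lt_le. intro. apply Hn. exists x. auto. lra. }
  destruct Hx as [x [Hx1 Hx2]]. exists x. split; auto.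
  assert (Eq : hsub (T x) (hscal M x) = hsub (T' x) (hscal M' x)).
  { rewrite Q'. unfold M'. veq. }
  rewrite Eq.
  assert (G := gcs2 T' M' x L' S' P' B' HM').
  assert (Hsq : hinner (hsub (T' x) (hscal M' x)) (hsub (T' x) (hscal M' x)) < eps * eps).
  { autorewrite with hin. rewrite !hinner_sub_r, !hinner_scal_r. rewrite (hinner_sym Y x (T' x)).
    rewrite <- (hnorm_sq x), Hx1.
    assert (hinner (T' x) x = hinner (T x) x + C).
    { rewrite Q'. autorewrite with hin. rewrite <- (hnorm_sq x), Hx1. ring. }
    rewrite H in *.
    assert (M' * (M' - (hinner (T x) x + C)) < M' * eta + eta).
    { replace (M' - (hinner (T x) x + C)) with (M - hinner (T x) x) by (unfold M'; ring).
      assert (M' * (M - hinner (T x) x) <= M' * eta) by (apply Rmult_le_compat_l; lra). lra. }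
    replace (M' * eta + eta) with (eps*eps) in H0 by (unfold eta; field; lra).
    lra. }
  rewrite <- hnorm_sq in Hsq. pose proof (hnorm_ge0 (hsub (T' x) (hscal M' x))). nra.
Qed.

Definition bb (A : Y -> Y) (c : R) : Prop := 0 < c /\ forall x, c * hnorm x <= hnorm (A x).

Lemma bb_no_approx T r c : bb (fun x => hsub (T x) (hscal r x)) c ->
  ~ (forall eps, eps > 0 -> exists x, hnorm x = 1 /\ hnorm (hsub (T x) (hscal r x)) < eps).
Proof.
  intros [Hc H] Hn. destruct (Hn c Hc) as [x [Hx1 Hx2]]. specialize (H x). rewrite Hx1 in H. lra.
Qed.

Lemma inf_lemma T C (e0 : Y) : lin T -> sa T -> bndc T C -> hnorm e0 = 1 ->
  exists m, (forall x, m * hinner x x <= hinner (T x) x) /\ Rabs m <= C /\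
    forall eps, eps > 0 -> exists x, hnorm x = 1 /\ hnorm (hsub (T x) (hscal m x)) < eps.
Proof.
  intros HL HS HB He.
  set (T' := fun x => hopp (T x)).
  assert (L' : lin T') by (destruct HL as [La Ls]; split; intros; unfold T'; rewrite ?La, ?Ls; veq).
  assert (S' : sa T') by (intros x y; unfold T'; rewrite hinner_opp_l, hinner_opp_r, HS; auto).
  assert (B' : bndc T' C) by (intro x; unfold T'; rewrite hnorm_opp; auto).
  destruct (sup_lemma T' C e0 L' S' B' He) as [M [H1 [H2 H3]]].
  exists (-M). split; [|split].
  - intro x. specialize (H1 x). unfold T' in H1. rewrite hinner_opp_l in H1. lra.
  - rewrite Rabs_Ropp. auto.
  - intros eps Heps. destruct (H3 eps Heps) as [x [Hx1 Hx2]]. exists x. split; auto.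
    replace (hsub (T x) (hscal (- M) x)) with (hopp (hsub (T' x) (hscal M x))) by (unfold T'; veq).
    rewrite hnorm_opp. auto.
Qed.

End Ops.


Section Gap.
Context {Y : RHilbert}.
Implicit Types x y z w : Y.

Definition opsub (A : Y -> Y) (r : R) : Y -> Y := fun x => hsub (A x) (hscal r x).

Lemma bb_comp A B c1 c2 : bb A c1 -> bb B c2 -> bb (fun x => A (B x)) (c1 * c2).
Proof.
  intros [H1 A1] [H2 B1]. split. nra. intro x. specialize (A1 (B x)). specialize (B1 x).
  pose proof (hnorm_ge0 x). nra.
Qed.

Lemma lin_comp A B : lin A -> lin B -> lin (fun x => A (B x)).
Proof. intros [A1 A2] [B1 B2]. split; intros; rewrite ?B1, ?B2, ?A1, ?A2; auto. Qed.
Lemma sa_comp A B : sa A -> sa B -> sa (fun x => A (B x)) -> True. Proof. auto. Qed.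

Lemma lin_opsub A r : lin A -> lin (opsub A r).
Proof. intros [A1 A2]. unfold opsub. split; intros; rewrite ?A1, ?A2; veq. Qed.
Lemma sa_opsub A r : sa A -> sa (opsub A r).
Proof. intros H x y. unfold opsub. autorewrite with hin hinr. rewrite H, (hinner_sym Y x y). ring. Qed.
Lemma bnd_opsub A r C : bndc A C -> bndc (opsub A r) (C + Rabs r).
Proof. intros H x. unfold opsub. eapply Rle_trans. apply hnorm_sub. rewrite hnorm_scal. specialize (H x). lra. Qed.

Lemma bnd_comp A B CA CB : bndc A CA -> bndc B CB -> 0 <= CA -> bndc (fun x => A (B x)) (CA * CB).
Proof. intros HA HB H x. eapply Rle_trans. apply HA. rewrite Rmult_assoc. apply Rmult_le_compat_l; auto. Qed.

Definition Tp (T : Y -> Y) (m : nat) (x : Y) : Y := Nat.iter m T x.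

Lemma Tp_S T m x : Tp T (S m) x = T (Tp T m x). Proof. reflexivity. Qed.
Lemma Tp_S' T m x : Tp T (S m) x = Tp T m (T x).
Proof. unfold Tp. induction m; simpl; auto. simpl in IHm. rewrite IHm. reflexivity. Qed.
Lemma Tp_add T i j x : Tp T (i + j) x = Tp T i (Tp T j x).
Proof. unfold Tp. induction i; simpl; auto. rewrite IHi. auto. Qed.
Lemma Tp_sa T m x y : sa T -> hinner (Tp T m x) y = hinner x (Tp T m y).
Proof. intro HS. revert x y. induction m; intros; simpl; auto. rewrite HS, IHm, <- Tp_S'. reflexivity. Qed.
Lemma Tp_lin T m : lin T -> lin (Tp T m).
Proof. intro HL. induction m. split; intros; reflexivity. simpl. apply (lin_comp T (Tp T m)); auto. Qed.
Lemma Tp_fix T m x : T x = x -> Tp T m x = x.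
Proof. intro H. induction m; simpl; auto. unfold Tp in *. simpl. rewrite IHm. auto. Qed.
Lemma Tp_comm T E m x : (forall v, T (E v) = E (T v)) -> Tp T m (E x) = E (Tp T m x).
Proof. intro H. induction m; simpl; auto. unfold Tp in *; simpl. rewrite IHm, H. auto. Qed.
Lemma Tp_bnd T m x : bndc T 1 -> hnorm (Tp T m x) <= hnorm x.
Proof. intro H. induction m; simpl. lra. unfold Tp in *. simpl. eapply Rle_trans. apply H. lra. Qed.

Lemma dec_cauchy (a : nat -> R) : (forall p, a (S p) <= a p) -> (forall p, 0 <= a p) ->
  exists l, (forall p, l <= a p) /\ forall e, e > 0 -> exists N, forall p, (N <= p)%nat -> a p < l + e.
Proof.
  intros Hd Hp.
  assert (Hmon : forall p q, (p <= q)%nat -> a q <= a p).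
  { intros p q H. induction H. lra. specialize (Hd m). lra. }
  set (E := fun r => exists p, r = - a p).
  assert (Eb : bound E) by (exists 0; intros r [p ->]; specialize (Hp p); lra).
  destruct (completeness E Eb (ex_intro _ _ (ex_intro _ 0%nat eq_refl))) as [M [H1 H2]].
  exists (-M). split.
  - intro p. assert (- a p <= M) by (apply H1; exists p; auto). lra.
  - intros e He. apply NNPP. intro Hn.
    assert (M <= M - e). apply H2. intros r [p ->].
    apply Rnot_lt_le. intro. apply Hn. exists p. intros q Hq. specialize (Hmon p q Hq). lra. lra.
Qed.

Section Core.
Variable K : Y -> Y.
Variable CK : R.
Variable phi : Y.
Hypothesis KL : lin K.
Hypothesis KS : sa K.
Hypothesis KB : bndc K CK.
Hypothesis Kgap : forall r, 0 < Rabs r < 1/2 -> exists c, bb (opsub K r) c.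
Hypothesis Hphi : hnorm phi = 1.
Hypothesis Kker : forall z, K z = hzero -> exists c, z = hscal c phi.
Hypothesis Kphi : K phi = hzero.

Let E := fun x => K (K x).
Lemma EL : lin E. Proof. exact (lin_comp K K KL KL). Qed.
Lemma ES : sa E. Proof. intros x y. unfold E. rewrite KS, KS. auto. Qed.
Lemma CK0 : 0 <= CK. Proof. exact (bnd_C_nonneg K CK phi KB Hphi). Qed.
Lemma EB : bndc E (CK * CK). Proof. exact (bnd_comp K K CK CK KB KB CK0). Qed.
Lemma Epos x : 0 <= hinner (E x) x.
Proof. unfold E. rewrite KS. apply nsq_ge0. Qed.
Lemma Eform x : hinner (E x) x = hinner (K x) (K x).
Proof. unfold E. rewrite KS. auto. Qed.

Lemma Egap r : 0 < r < 1/4 -> exists c, bb (opsub E r) c.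
Proof.
  intro Hr. set (q := sqrt r).
  assert (Hq : 0 < q) by (apply sqrt_lt_R0; lra).
  assert (Hq2 : q * q = r) by (apply sqrt_sqrt; lra).
  assert (Hq3 : q < 1/2) by nra.
  destruct (Kgap q) as [c1 B1]. rewrite Rabs_pos_eq; lra.
  destruct (Kgap (-q)) as [c2 B2]. rewrite Rabs_Ropp, Rabs_pos_eq; lra.
  exists (c1 * c2). destruct (bb_comp _ _ _ _ B1 B2) as [Hc Hb]. split; auto.
  intro x. specialize (Hb x). replace (opsub E r x) with (opsub K q (opsub K (-q) x)); auto.
  unfold opsub, E. destruct KL as [K1 K2]. rewrite lin_sub, K2 by auto. rewrite <- Hq2. veq.
Qed.

Lemma E_quarter x : (1/4) * hinner (E x) x <= hinner (E x) (E x).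
Proof.
  set (F2 := opsub (fun v => E (E v)) 0 ).
  set (G := fun v => hsub (E (E v)) (hscal (1/4) (E v))).
  assert (GL : lin G).
  { destruct EL as [E1 E2]. unfold G. split; intros; rewrite ?E1, ?E2; veq. }
  assert (GS : sa G).
  { intros a b. unfold G. autorewrite with hin hinr. rewrite !ES. ring. }
  assert (GB : bndc G (CK * CK * (CK * CK) + Rabs (1/4) * (CK*CK))).
  { intro v. unfold G. eapply Rle_trans. apply hnorm_sub. rewrite hnorm_scal.
    pose proof (EB (E v)). pose proof (EB v). pose proof CK0.
    assert (CK * CK * hnorm (E v) <= CK * CK * (CK * CK * hnorm v)) by (apply Rmult_le_compat_l; nra).
    assert (Rabs (1/4) * hnorm (E v) <= Rabs (1/4) * (CK * CK * hnorm v)) by (apply Rmult_le_compat_l; [apply Rabs_pos|lra]).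
    lra. }
  destruct (inf_lemma G _ phi GL GS GB Hphi) as [m [Hm1 [_ Hm3]]].
  assert (Glow : forall v, - (1/64) * hinner v v <= hinner (G v) v).
  { intro v. pose proof (nsq_ge0 (hsub (E v) (hscal (1/8) v))) as H.
    unfold G. autorewrite with hin hinr in H |- *. rewrite (ES (E v) v).
    rewrite (hinner_sym Y v (E v)) in H. lra. }
  assert (Hmlow : -(1/64) <= m).
  { apply Rnot_lt_le. intro Hc. destruct (Hm3 (-(1/64) - m)) as [v [Hv1 Hv2]]. lra.
    pose proof (CS (hsub (G v) (hscal m v)) v). rewrite Hv1 in H. rewrite hinner_sub_l, hinner_scal in H.
    rewrite <- (hnorm_sq v), Hv1 in H. specialize (Glow v). rewrite <- (hnorm_sq v), Hv1 in Glow.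
    apply Rabs_def2b in H. lra. }
  assert (Hm0 : 0 <= m).
  { apply Rnot_lt_le. intro Hc.
    set (d := 1/16 + 4 * m). assert (Hd : 0 <= d) by (unfold d; lra).
    set (s := sqrt d). assert (Hs : 0 <= s) by apply sqrt_pos. assert (Hs2 : s * s = d) by (apply sqrt_sqrt; auto).
    assert (Hs3 : s < 1/4) by (unfold d in Hs2; nra).
    set (r1 := (1/4 + s)/2). set (r2 := (1/4 - s)/2).
    destruct (Egap r1) as [c1 B1]. unfold r1; lra.
    destruct (Egap r2) as [c2 B2]. unfold r2; lra.
    destruct (bb_comp _ _ _ _ B1 B2) as [Hc12 Hb].
    destruct (Hm3 (c1 * c2)) as [v [Hv1 Hv2]]. lra.
    specialize (Hb v). rewrite Hv1 in Hb.
    replace (opsub E r1 (opsub E r2 v)) with (hsub (G v) (hscal m v)) in Hb. lra.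
    unfold opsub, G. rewrite (lin_sub E _ _ EL). destruct EL as [E1 E2]. rewrite E2.
    assert (m = -(r1 * r2)).
    { unfold r1, r2. replace ((1 / 4 + s) / 2 * ((1 / 4 - s) / 2)) with ((1/16 - s * s)/4) by field.
      rewrite Hs2. unfold d. field. }
    assert (r1 + r2 = 1/4) by (unfold r1, r2; lra).
    rewrite H. rewrite <- H0. veq. }
  specialize (Hm1 x). unfold G in Hm1. rewrite hinner_sub_l, hinner_scal, ES in Hm1.
  pose proof (nsq_ge0 x). nra.
Qed.

Lemma E_range v : (1/4) * hnorm (E v) <= hnorm (E (E v)).
Proof.
  set (w := E v).
  pose proof (gcs E v w EL ES Epos) as G.
  assert (Hw : hinner (E v) w = hinner w w) by reflexivity. rewrite Hw in G.
  pose proof (E_quarter v) as Q. fold w in Q.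
  assert (Q2 : hinner w w * hinner w w <= 4 * hinner w w * hinner (E w) w).
  { eapply Rle_trans. apply G. pose proof (Epos w). pose proof (Epos v). apply Rmult_le_compat_r; auto. change (hinner (E v) v) with (hinner w v). lra. }
  assert (Q3 : (1/4) * hinner w w <= hinner (E w) w).
  { destruct (Req_dec (hinner w w) 0) as [Z|Z]. rewrite Z. pose proof (Epos w). lra.
    pose proof (nsq_ge0 w). assert (0 < hinner w w) by lra. nra. }
  pose proof (CS' (E w) w). rewrite <- hnorm_sq in Q3.
  pose proof (hnorm_ge0 w). pose proof (hnorm_ge0 (E w)).
  destruct (Req_dec (hnorm w) 0) as [Z|Z]. rewrite Z. lra.
  assert (0 < hnorm w) by lra. nra.
Qed.

Lemma gap_core : exists c, 0 < c /\ forall x, hinner x phi = 0 -> c * hnorm x <= hnorm (K x).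
Proof.
  set (beta := CK * CK + 1).
  assert (Hb : 0 < beta) by (unfold beta; nra).
  set (T := fun x => hsub x (hscal (/beta) (E x))).
  assert (TL : lin T) by (destruct EL as [E1 E2]; unfold T; split; intros; rewrite ?E1, ?E2; veq).
  assert (TS : sa T) by (intros a b; unfold T; autorewrite with hin hinr; rewrite ES; ring).
  assert (TE : forall v, T (E v) = E (T v)).
  { intro v. unfold T. rewrite (lin_sub E _ _ EL). destruct EL as [E1 E2]. rewrite E2. auto. }
  assert (EBb : bndc E beta).
  { intro v. eapply Rle_trans. apply EB. unfold beta. pose proof (hnorm_ge0 v). nra. }
  assert (TB : bndc T 1).
  { apply quad_bound; auto. lra. intro v. unfold T. autorewrite with hin.
    pose proof (Epos v). pose proof (CS' (E v) v). pose proof (EBb v).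
    rewrite <- hnorm_sq. pose proof (hnorm_ge0 v). pose proof (hnorm_ge0 (E v)).
    assert (hinner (E v) v <= beta * (hnorm v * hnorm v)) by nra.
    assert (/ beta * hinner (E v) v <= hnorm v * hnorm v).
    { apply Rmult_le_reg_l with beta; auto. rewrite <- Rmult_assoc, Rinv_r by lra. lra. }
    assert (0 <= / beta * hinner (E v) v) by (apply Rmult_le_pos; [apply Rlt_le, Rinv_0_lt_compat|]; lra).
    apply Rabs_le. lra. }
  assert (Tphi : T phi = phi).
  { unfold T, E. rewrite Kphi, lin_zero by auto. veq. }
  exists (/ (4 * beta)). split. apply Rinv_0_lt_compat; lra. intros x Hx.
  (* power iteration *)
  set (a := fun p => hinner (Tp T p x) (Tp T p x)).
  assert (ad : forall p, a (S p) <= a p).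
  { intro p. unfold a. rewrite <- !hnorm_sq. rewrite Tp_S. pose proof (TB (Tp T p x)).
    pose proof (hnorm_ge0 (T (Tp T p x))). nra. }
  assert (ap : forall p, 0 <= a p) by (intro; apply nsq_ge0).
  destruct (dec_cauchy a ad ap) as [l [Hl1 Hl2]].
  set (zs := fun p => Tp T (2 * p) x).
  assert (I1 : forall i j, hinner (Tp T i x) (Tp T j x) = hinner (Tp T (i+j) x) x).
  { intros i j. rewrite (Tp_sa T i x (Tp T j x) TS), <- Tp_add. apply hinner_sym. }
  assert (Hdist : forall p q, hinner (hsub (zs p) (zs q)) (hsub (zs p) (zs q)) = a (2*p)%nat + a (2*q)%nat - 2 * a (p+q)%nat).
  { intros p q. unfold zs, a. autorewrite with hin hinr. rewrite !I1.
    replace (2*q + 2*p)%nat with (2*p+2*q)%nat by lia.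
    replace (p + q + (p + q))%nat with (2*p+2*q)%nat by lia. ring. }
  assert (Cau : cauchyY zs).
  { intros e He. destruct (Hl2 (e * e / 2)) as [N HN]. nra.
    exists N. intros p q Hp Hq. apply Rnot_le_lt. intro Hc.
    assert (e * e <= hinner (hsub (zs p) (zs q)) (hsub (zs p) (zs q))).
    { rewrite <- hnorm_sq. nra. }
    rewrite Hdist in H. pose proof (HN (2*p)%nat ltac:(lia)). pose proof (HN (2*q)%nat ltac:(lia)).
    pose proof (Hl1 (p+q)%nat). lra. }
  destruct (complete_Y zs Cau) as [zl Hzl].
  assert (TTlip : forall u v, hnorm (hsub (T (T u)) (T (T v))) <= 1 * hnorm (hsub u v)).
  { intros u v. pose proof (lin_comp T T TL TL) as TTL. rewrite <- (lin_sub (fun v => T (T v))) by auto.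
    eapply Rle_trans. apply TB. eapply Rle_trans. apply Rmult_le_compat_l. lra. apply TB. lra. }
  assert (Hfix : T (T zl) = zl).
  { apply (cvY_unique (fun p => T (T (zs p)))).
    exact (cvY_lip (fun v => T (T v)) 1 zs zl TTlip Hzl).
    apply (cvY_ext (fun p => zs (p + 1)%nat)). intro p. unfold zs.
    replace (2 * (p + 1))%nat with (S (S (2 * p))) by lia. reflexivity.
    apply cvY_shift; auto. }
  assert (HEz : E zl = hzero).
  { assert (G1 : hinner (T zl) (T zl) = hinner zl zl).
    { rewrite <- TS, Hfix. auto. }
    unfold T in G1. autorewrite with hin hinr in G1.
    rewrite (hinner_sym Y zl (E zl)) in G1.
    pose proof (gcs2 E beta zl EL ES Epos EBb ltac:(lra)) as G2.
    pose proof (Epos zl).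
    assert (G3 : hinner (E zl) (E zl) = 2 * beta * hinner (E zl) zl).
    { apply Rmult_eq_reg_l with (/beta * / beta). 2: { apply Rgt_not_eq. apply Rmult_lt_0_compat; apply Rinv_0_lt_compat; lra. }
      assert (/beta * (/ beta * hinner (E zl) (E zl)) = 2 * / beta * hinner (E zl) zl) by nra.
      replace (/ beta * / beta * (2 * beta * hinner (E zl) zl)) with (2 * /beta * hinner (E zl) zl) by (field; lra). lra. }
    assert (beta * hinner (E zl) zl <= 0) by lra. assert (hinner (E zl) zl <= 0) by (apply Rmult_le_reg_l with beta; lra).
    apply hinner_def. pose proof (nsq_ge0 (E zl)). lra. }
  assert (Hz0 : zl = hzero).
  { assert (HKz : K zl = hzero).
    { apply hinner_def. rewrite <- Eform, HEz. apply hinner_zero_l. }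
    destruct (Kker zl HKz) as [c Hc].
    assert (Hin : hinner zl phi = 0).
    { apply (cvY_inner_eq zs zl phi 0 Hzl). intro p. unfold zs.
      rewrite Tp_sa by auto. rewrite Tp_fix by auto. exact Hx. }
    rewrite Hc, hinner_scal, <- hnorm_sq, Hphi in Hin.
    assert (c = 0) by lra. subst. apply hscal_zero_l. }
  assert (Hrange : forall m, exists y, hsub x (Tp T m x) = E y).
  { induction m.
    - exists hzero. rewrite lin_zero by exact EL. simpl. unfold Tp. simpl. apply hsub_diag.
    - destruct IHm as [y Hy].
      exists (hadd y (Tp T m (hscal (/beta) x))).
      assert (Hl := Tp_lin T m TL).
      destruct EL as [E1 E2]. rewrite E1. rewrite <- (Tp_comm T E m _ TE). rewrite E2. rewrite <- Hy.
      rewrite Tp_S'. destruct Hl as [P1 P2]. rewrite P2.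
      assert (Eq : Tp T m (T x) = hsub (Tp T m x) (hscal (/beta) (Tp T m (E x)))).
      { change (T x) with (hsub x (hscal (/beta) (E x))). rewrite (lin_sub (Tp T m) _ _ (Tp_lin T m TL)). rewrite P2. auto. }
      rewrite Eq. veq. }
  assert (Hlow : / 4 * hnorm x <= hnorm (E x)).
  { apply Rnot_lt_le. intro Hc.
    set (eta := (/4 * hnorm x - hnorm (E x)) / (beta + 1)).
    assert (Heta : 0 < eta) by (unfold eta; apply Rdiv_lt_0_compat; lra).
    destruct (Hzl eta Heta) as [N HN]. specialize (HN N (le_n _)).
    rewrite Hz0 in HN. replace (hsub (zs N) hzero) with (zs N) in HN by veq.
    destruct (Hrange (2 * N)%nat) as [y Hy]. fold (zs N) in Hy.
    pose proof (E_range y) as R1. rewrite <- Hy in R1.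
    rewrite (lin_sub E _ _ EL) in R1.
    pose proof (hnorm_sub (E x) (E (zs N))) as R2.
    pose proof (EBb (zs N)) as R3.
    pose proof (hnorm_rev x (zs N)) as R4.
    assert (/4 * hnorm x - /4 * eta <= hnorm (E x) + beta * eta).
    { pose proof (hnorm_ge0 (zs N)). nra. }
    unfold eta in H. assert ((/ 4 * hnorm x - hnorm (E x)) <= (/4 + beta) * ((/ 4 * hnorm x - hnorm (E x)) / (beta + 1))) by lra.
    assert ((/4 + beta) * ((/ 4 * hnorm x - hnorm (E x)) / (beta + 1)) < (/ 4 * hnorm x - hnorm (E x))).
    { replace ((/4 + beta) * ((/ 4 * hnorm x - hnorm (E x)) / (beta + 1))) with
        ((/ 4 * hnorm x - hnorm (E x)) * ((/4 + beta)/(beta + 1))) by (field; lra).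
      rewrite <- (Rmult_1_r (/ 4 * hnorm x - hnorm (E x))) at 2.
      apply Rmult_lt_compat_l. lra. apply (Rmult_lt_reg_r (beta + 1)). lra.
      replace ((/ 4 + beta) / (beta + 1) * (beta + 1)) with (/4 + beta) by (field; lra). lra. }
    lra. }
  assert (HKx : hnorm (E x) <= beta * hnorm (K x)).
  { unfold E. eapply Rle_trans. apply KB. apply Rmult_le_compat_r. apply hnorm_ge0.
    unfold beta. nra. }
  apply (Rmult_le_reg_l (4 * beta)). lra.
  rewrite <- Rmult_assoc, Rinv_r by lra. lra.
Qed.

End Core.
End Gap.


Section Spec.
Context {Y : RHilbert}.
Implicit Types x y z w : Y.

Variable D : Y -> Prop.
Variable L : Y -> Y.
Variable lam : R.
Variable phi : Y.
Hypothesis SA : self_adjoint D L.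
Hypothesis SE : simple_isolated_eigenvalue D L lam phi.

Lemma D0 : D hzero. Proof. destruct SA as [[H _] _]. auto. Qed.
Lemma Dadd x y : D x -> D y -> D (hadd x y). Proof. destruct SA as [[_ [H _]] _]. auto. Qed.
Lemma Dscal a x : D x -> D (hscal a x). Proof. destruct SA as [[_ [_ H]] _]. auto. Qed.
Lemma Dsub x y : D x -> D y -> D (hsub x y).
Proof. intros. unfold hsub. rewrite hopp_scal. apply Dadd; auto. apply Dscal; auto. Qed.
Lemma Ladd x y : D x -> D y -> L (hadd x y) = hadd (L x) (L y).
Proof. destruct SA as [_ [_ [[H _] _]]]. auto. Qed.
Lemma Lscal a x : D x -> L (hscal a x) = hscal a (L x).
Proof. destruct SA as [_ [_ [[_ H] _]]]. auto. Qed.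
Lemma Lsub x y : D x -> D y -> L (hsub x y) = hsub (L x) (L y).
Proof. intros. unfold hsub. rewrite !hopp_scal, Ladd, Lscal; auto. apply Dscal; auto. Qed.
Lemma Lzero : L hzero = hzero.
Proof. rewrite <- (hscal_zero_l hzero), Lscal. rewrite !hscal_zero_l. auto. apply D0. Qed.
Lemma Lsym x y : D x -> D y -> hinner (L x) y = hinner x (L y).
Proof. destruct SA as [_ [_ [_ [H _]]]]. auto. Qed.

Lemma phiD : D phi. Proof. destruct SE as [H _]. auto. Qed.
Lemma phin : hnorm phi = 1. Proof. destruct SE as [_ [H _]]. auto. Qed.
Lemma phii : hinner phi phi = 1. Proof. rewrite <- hnorm_sq, phin. ring. Qed.
Lemma Lphi : L phi = hscal lam phi. Proof. destruct SE as [_ [_ [H _]]]. auto. Qed.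
Lemma Lsimple x : D x -> L x = hscal lam x -> exists c, x = hscal c phi.
Proof. destruct SE as [_ [_ [_ [H _]]]]. auto. Qed.
Lemma Liso : exists eps, eps > 0 /\ forall mu, mu <> lam -> Rabs (mu - lam) < eps -> in_resolvent D L mu.
Proof. destruct SE as [_ [_ [_ [_ H]]]]. auto. Qed.

Lemma Lphi_inner x : D x -> hinner (L x) phi = lam * hinner x phi.
Proof. intro. rewrite Lsym, Lphi by (auto; apply phiD). rewrite hinner_scal_r. auto. Qed.

Definition Lm (mu : R) x := hsub (L x) (hscal mu x).

Lemma Lm_scal mu a x : D x -> Lm mu (hscal a x) = hscal a (Lm mu x).
Proof. intro. unfold Lm. rewrite Lscal by auto. veq. Qed.
Lemma Lm_sub mu x y : D x -> D y -> Lm mu (hsub x y) = hsub (Lm mu x) (Lm mu y).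
Proof. intros. unfold Lm. rewrite Lsub by auto. veq. Qed.
Lemma Lm_add mu x y : D x -> D y -> Lm mu (hadd x y) = hadd (Lm mu x) (Lm mu y).
Proof. intros. unfold Lm. rewrite Ladd by auto. veq. Qed.

Record resolv (mu : R) (Rr : Y -> Y) (C : R) : Prop := {
  r_lin : lin Rr;
  r_bnd : bndc Rr C;
  r_D : forall y, D (Rr y);
  r_right : forall y, Lm mu (Rr y) = y;
  r_left : forall x, D x -> Rr (Lm mu x) = x }.

Lemma get_res mu : in_resolvent D L mu -> exists Rr C, resolv mu Rr C.
Proof.
  intros [Rr [[L1 L2] [[C HC] [H1 H2]]]]. exists Rr, C. split; auto.
  split; intros; auto. intro y. apply H1. intro y. apply H1.
Qed.

Lemma res_C mu Rr C : resolv mu Rr C -> 0 <= C.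
Proof. intro H. exact (bnd_C_nonneg Rr C phi (r_bnd _ _ _ H) phin). Qed.

Lemma res_sa mu Rr C : resolv mu Rr C -> sa Rr.
Proof.
  intros H a b. rewrite <- (r_right _ _ _ H b) at 1. rewrite <- (r_right _ _ _ H a) at 2.
  unfold Lm. autorewrite with hin hinr. rewrite Lsym by apply (r_D _ _ _ H).
  rewrite (hinner_sym Y (Rr a) (Rr b)). ring.
Qed.

Lemma res_phi mu Rr C : resolv mu Rr C -> mu <> lam -> Rr phi = hscal (/ (lam - mu)) phi.
Proof.
  intros H Hm. assert (E : Lm mu phi = hscal (lam - mu) phi) by (unfold Lm; rewrite Lphi; veq).
  pose proof (r_left _ _ _ H phi phiD) as G. rewrite E in G. destruct (r_lin _ _ _ H) as [_ S].
  rewrite S in G. rewrite <- G at 2. rewrite hscal_assoc. rewrite Rinv_l by lra. rewrite hscal_one. auto.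
Qed.

Lemma res_H mu Rr C y : resolv mu Rr C -> mu <> lam -> hinner y phi = 0 -> hinner (Rr y) phi = 0.
Proof. intros H Hm Hy. rewrite (res_sa _ _ _ H), (res_phi _ _ _ H Hm), hinner_scal_r, Hy. ring. Qed.

Definition Happrox (l : R) : Prop :=
  forall eps, eps > 0 -> exists w, D w /\ hinner w phi = 0 /\ hnorm w = 1 /\ hnorm (Lm l w) < eps.

Lemma Happrox_res l : Happrox l -> ~ in_resolvent D L l.
Proof.
  intros H Hr. destruct (get_res l Hr) as [Rr [C HR]]. pose proof (res_C _ _ _ HR).
  destruct (H (/ (C + 1))) as [w [Dw [_ [Hw1 Hw2]]]]. apply Rinv_0_lt_compat; lra.
  pose proof (r_bnd _ _ _ HR (Lm l w)) as B. rewrite (r_left _ _ _ HR w Dw), Hw1 in B.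
  assert (C * hnorm (Lm l w) <= C * / (C + 1)) by (apply Rmult_le_compat_l; lra).
  assert (C * / (C+1) < 1). { apply (Rmult_lt_reg_r (C+1)). lra. rewrite Rmult_assoc, Rinv_l by lra. lra. }
  lra.
Qed.

Lemma gapL : exists c, 0 < c /\ forall x, D x -> hinner x phi = 0 -> c * hnorm x <= hnorm (Lm lam x).
Proof.
  destruct Liso as [e0 [He0 Hiso]].
  set (delta := e0 / 2). assert (Hd : 0 < delta) by (unfold delta; lra).
  set (nu := lam + delta).
  destruct (get_res nu) as [Rr [C HR]].
  { apply Hiso. unfold nu; lra. unfold nu. replace (lam + delta - lam) with delta by ring.
    rewrite Rabs_pos_eq; unfold delta; lra. }
  pose proof (res_C _ _ _ HR) as HC.
  destruct (r_lin _ _ _ HR) as [R1 R2].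
  set (K := fun y => hadd y (hscal delta (Rr y))).
  assert (KL : lin K) by (unfold K; split; intros; rewrite ?R1, ?R2; veq).
  assert (KS : sa K).
  { intros a b. unfold K. autorewrite with hin hinr. rewrite (res_sa _ _ _ HR). ring. }
  assert (KB : bndc K (1 + delta * C)).
  { intro y. unfold K. eapply Rle_trans. apply hnorm_add. rewrite hnorm_scal, Rabs_pos_eq by lra.
    pose proof (r_bnd _ _ _ HR y). nra. }
  assert (Kphi : K phi = hzero).
  { unfold K. rewrite (res_phi _ _ _ HR) by (unfold nu; lra). rewrite hscal_assoc.
    replace (delta * / (lam - nu)) with (-1) by (unfold nu; field; lra). veq. }
  assert (Kker : forall z, K z = hzero -> exists c, z = hscal c phi).
  { intros z Hz. unfold K in Hz.
    assert (Ez : z = hscal (- delta) (Rr z)).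
    { apply hsub_eq0. rewrite <- Hz. veq. }
    assert (Dz : D z) by (rewrite Ez; apply Dscal, (r_D _ _ _ HR)).
    apply Lsimple; auto.
    assert (G : Lm nu z = hscal (-delta) z).
    { rewrite Ez at 1. rewrite Lm_scal by apply (r_D _ _ _ HR). rewrite (r_right _ _ _ HR). auto. }
    unfold Lm in G. apply hsub_eq0. apply hext. intro y.
    assert (G2 := f_equal (fun v => hinner v y) G). simpl in G2. autorewrite with hin in G2 |- *.
    unfold nu in G2. lra. }
  assert (Kgap : forall r, 0 < Rabs r < 1/2 -> exists c, bb (opsub K r) c).
  { intros r Hr. set (l := lam - delta * r / (1 - r)).
    assert (H1r : 1/2 < 1 - r) by (pose proof (Rle_abs r); destruct Hr; lra).
    destruct (get_res l) as [Rl [Cl HRl]].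
    { apply Hiso.
      - unfold l. intro E. assert (delta * r / (1 - r) = 0) by lra.
        assert (r <> 0) by (intro; subst; rewrite Rabs_R0 in Hr; lra).
        unfold Rdiv in H. apply Rmult_integral in H as [H|H]. apply Rmult_integral in H as [H|H]; lra.
        pose proof (Rinv_neq_0_compat (1-r)). lra.
      - unfold l. replace (lam - delta * r / (1 - r) - lam) with (- (delta * (r / (1-r)))) by (field; lra).
        rewrite Rabs_Ropp, Rabs_mult, Rabs_pos_eq by lra. unfold Rdiv. rewrite Rabs_mult.
        rewrite (Rabs_pos_eq (/ (1-r))) by (apply Rlt_le, Rinv_0_lt_compat; lra).
        assert (Rabs r * / (1 - r) < 1).
        { apply (Rmult_lt_reg_r (1-r)). lra. rewrite Rmult_assoc, Rinv_l by lra. lra. }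
        assert (delta * (Rabs r * / (1-r)) < delta * 1) by (apply Rmult_lt_compat_l; lra).
        unfold delta in *. lra. }
    pose proof (res_C _ _ _ HRl) as HCl.
    set (k := 1 + Rabs (l - nu) * Cl).
    assert (Hk : 0 < k) by (unfold k; pose proof (Rabs_pos (l - nu)); nra).
    exists ((1 - r) / k). split. apply Rdiv_lt_0_compat; lra.
    intro y. set (v := Rr y). assert (Dv : D v) by apply (r_D _ _ _ HR).
    assert (Hy : y = Lm nu v) by (symmetry; apply (r_right _ _ _ HR)).
    set (v' := hscal (1 - r) v). assert (Dv' : D v') by (apply Dscal; auto).
    assert (E1 : opsub K r y = Lm l v').
    { unfold opsub, K, v'. fold v. rewrite Lm_scal by auto. rewrite Hy at 1 2. unfold Lm, l, nu. apply hext. intro z.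
      autorewrite with hin. field. lra. }
    assert (E2 : Rl (opsub K r y) = v') by (rewrite E1; apply (r_left _ _ _ HRl); auto).
    assert (E3 : y = hscal (/ (1-r)) (hadd (opsub K r y) (hscal (l - nu) (Rl (opsub K r y))))).
    { rewrite E2, E1. unfold v', Lm. rewrite Hy at 1. unfold Lm. rewrite Lscal by auto. apply hext. intro z.
      autorewrite with hin. field. lra. }
    assert (B : hnorm y <= / (1 - r) * (k * hnorm (opsub K r y))).
    { rewrite E3 at 1. rewrite hnorm_scal, Rabs_pos_eq by (apply Rlt_le, Rinv_0_lt_compat; lra).
      apply Rmult_le_compat_l. apply Rlt_le, Rinv_0_lt_compat; lra.
      eapply Rle_trans. apply hnorm_add. rewrite hnorm_scal. pose proof (r_bnd _ _ _ HRl (opsub K r y)).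
      pose proof (Rabs_pos (l - nu)). unfold k.
      assert (Rabs (l - nu) * hnorm (Rl (opsub K r y)) <= Rabs (l - nu) * (Cl * hnorm (opsub K r y))) by (apply Rmult_le_compat_l; auto). lra. }
    apply (Rmult_le_reg_l (k / (1 - r))). apply Rdiv_lt_0_compat; lra.
    replace (k / (1 - r) * ((1 - r) / k * hnorm y)) with (hnorm y) by (field; lra).
    replace (k / (1 - r) * hnorm (opsub K r y)) with (/ (1 - r) * (k * hnorm (opsub K r y))) by (field; lra). auto. }
  destruct (gap_core K (1 + delta * C) phi KL KS KB Kgap phin Kker Kphi) as [c [Hc Hg]].
  exists (c / (C + 1)). split. apply Rdiv_lt_0_compat; lra.
  intros x Dx Hx. specialize (Hg x Hx).
  assert (EK : K x = Rr (Lm lam x)).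
  { replace (Lm lam x) with (hadd (Lm nu x) (hscal delta x)) by (unfold Lm, nu; veq).
    rewrite R1, R2, (r_left _ _ _ HR x Dx). auto. }
  rewrite EK in Hg. pose proof (r_bnd _ _ _ HR (Lm lam x)).
  apply (Rmult_le_reg_l (C + 1)). lra.
  replace ((C + 1) * (c / (C + 1) * hnorm x)) with (c * hnorm x) by (field; lra).
  pose proof (hnorm_ge0 (Lm lam x)). nra.
Qed.

Notation P := (Pproj phi).
Lemma P_phi y : hinner (P y) phi = 0.
Proof. unfold Pproj. autorewrite with hin. rewrite phii. ring. Qed.
Lemma P_id y : hinner y phi = 0 -> P y = y.
Proof. intro H. unfold Pproj. rewrite H. veq. Qed.
Lemma P_lin : lin P.
Proof. unfold Pproj. split; intros; autorewrite with hin; veq. Qed.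
Lemma P_sa : sa P.
Proof. intros a b. unfold Pproj. autorewrite with hin hinr. rewrite (hinner_sym Y phi b), (hinner_sym Y a phi). ring. Qed.
Lemma P_norm y : hnorm (P y) <= hnorm y.
Proof.
  apply sq_le_norm. apply hnorm_ge0. rewrite !hnorm_sq. unfold Pproj. autorewrite with hin hinr.
  rewrite phii, (hinner_sym Y phi y). pose proof (Rle_0_sqr (hinner y phi)). unfold Rsqr in H. lra.
Qed.
Lemma P_bnd : bndc P 1. Proof. intro y. rewrite Rmult_1_l. apply P_norm. Qed.
Lemma P_D y : D y -> D (P y).
Proof. intro. unfold Pproj. apply Dsub; auto. apply Dscal, phiD. Qed.

Lemma Happrox_not_lam : ~ Happrox lam.
Proof.
  intro H. destruct gapL as [c [Hc Hg]]. destruct (H c Hc) as [w [Dw [Hw [Hw1 Hw2]]]].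
  specialize (Hg w Dw Hw). rewrite Hw1 in Hg. lra.
Qed.

Lemma approx_transfer (B : Y -> Y) nu r :
  (forall y, D (B y) /\ hinner (B y) phi = 0 /\ Lm nu (B y) = P y) -> r <> 0 ->
  (forall eps, eps > 0 -> exists x, hnorm x = 1 /\ hnorm (hsub (B x) (hscal r x)) < eps) ->
  Happrox (nu + / r).
Proof.
  intros HB Hr Ha eps Heps.
  assert (Hra : 0 < Rabs r) by (apply Rabs_pos_lt; auto).
  set (eta := Rmin (Rabs r / 2) (eps * (Rabs r * Rabs r) / 8)).
  assert (He1 : eta <= Rabs r / 2) by apply Rmin_l.
  assert (He2 : eta <= eps * (Rabs r * Rabs r) / 8) by apply Rmin_r.
  assert (He3 : 0 < eta) by (apply Rmin_pos; [lra| apply Rdiv_lt_0_compat; [apply Rmult_lt_0_compat; nra|lra]]).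
  destruct (Ha eta He3) as [x [Hx1 Hx2]].
  destruct (HB x) as [Dv [Hv Hv2]]. set (v := B x) in *. set (e := hsub v (hscal r x)) in *.
  assert (Hxphi : hinner x phi = - hinner e phi / r).
  { unfold e. rewrite hinner_sub_l, hinner_scal, Hv. field; auto. }
  assert (Hv3 : Lm (nu + / r) v = hsub (hscal (hinner e phi / r) phi) (hscal (/ r) e)).
  { assert (Ev : v = hadd e (hscal r x)) by (unfold e; veq).
    replace (Lm (nu + / r) v) with (hsub (Lm nu v) (hscal (/r) v)) by (unfold Lm; veq).
    rewrite Hv2. unfold Pproj. rewrite Hxphi. rewrite Ev. apply hext. intro z. autorewrite with hin. field. auto. }
  assert (Hn1 : hnorm (Lm (nu + / r) v) <= 2 * hnorm e / Rabs r).
  { rewrite Hv3. eapply Rle_trans. apply hnorm_sub. rewrite !hnorm_scal, phin.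
    unfold Rdiv. rewrite Rabs_mult, Rabs_inv. pose proof (CS e phi). rewrite phin in H.
    pose proof (Rinv_0_lt_compat _ Hra). pose proof (hnorm_ge0 e).
    assert (Rabs (hinner e phi) * / Rabs r <= hnorm e * 1 * / Rabs r) by (apply Rmult_le_compat_r; lra).
    lra. }
  assert (Hvn : Rabs r / 2 <= hnorm v).
  { pose proof (hnorm_rev (hscal r x) (hopp e)). replace (hsub (hscal r x) (hopp e)) with v in H by (unfold e; veq).
    rewrite hnorm_scal, Hx1, hnorm_opp in H. lra. }
  set (w := hscal (/ hnorm v) v).
  assert (Hvp : 0 < hnorm v) by lra.
  exists w. split; [|split; [|split]].
  - apply Dscal; auto.
  - unfold w. rewrite hinner_scal, Hv. ring.
  - unfold w. rewrite hnorm_scal, Rabs_pos_eq by (apply Rlt_le, Rinv_0_lt_compat; lra). field; lra.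
  - unfold w. rewrite Lm_scal by auto. rewrite hnorm_scal, Rabs_pos_eq by (apply Rlt_le, Rinv_0_lt_compat; lra).
    apply Rle_lt_trans with (/ hnorm v * (2 * hnorm e / Rabs r)).
    apply Rmult_le_compat_l. apply Rlt_le, Rinv_0_lt_compat; lra. auto.
    apply Rle_lt_trans with (2 / (Rabs r / 2) * (eta / Rabs r)).
    { replace (/ hnorm v * (2 * hnorm e / Rabs r)) with (2 / hnorm v * (hnorm e / Rabs r)) by (field; lra).
      apply Rmult_le_compat. apply Rlt_le, Rdiv_lt_0_compat; lra.
      unfold Rdiv; apply Rmult_le_pos; [apply hnorm_ge0| apply Rlt_le, Rinv_0_lt_compat; lra].
      unfold Rdiv. apply Rmult_le_compat_l. lra. apply Rinv_le_contravar; lra.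
      unfold Rdiv. apply Rmult_le_compat_r. apply Rlt_le, Rinv_0_lt_compat; lra. lra. }
    replace (2 / (Rabs r / 2) * (eta / Rabs r)) with (4 * eta / (Rabs r * Rabs r)) by (field; lra).
    apply (Rmult_lt_reg_r (Rabs r * Rabs r)). nra. unfold Rdiv. rewrite Rmult_assoc, Rinv_l by nra. nra.
Qed.

Lemma closed_H : closedP (fun x : Y => hinner x phi = 0).
Proof. intros u l Hu Hl. apply (cvY_inner_eq u l phi 0 Hl Hu). Qed.

Lemma RP_props mu Rr C : resolv mu Rr C -> mu <> lam ->
  lin (fun y => Rr (P y)) /\ sa (fun y => Rr (P y)) /\ bndc (fun y => Rr (P y)) C /\
  forall y, D (Rr (P y)) /\ hinner (Rr (P y)) phi = 0 /\ Lm mu (Rr (P y)) = P y.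
Proof.
  intros HR Hm. pose proof (res_C _ _ _ HR) as HC.
  assert (comm : forall y, Rr (P y) = P (Rr y)).
  { intro y. unfold Pproj. rewrite (lin_sub Rr _ _ (r_lin _ _ _ HR)). destruct (r_lin _ _ _ HR) as [_ R2].
    rewrite R2, (res_phi _ _ _ HR Hm). rewrite (res_sa _ _ _ HR), (res_phi _ _ _ HR Hm), hinner_scal_r. veq. }
  split; [|split; [|split]].
  - apply lin_comp. apply (r_lin _ _ _ HR). apply P_lin.
  - intros a b. rewrite (res_sa _ _ _ HR), comm. rewrite P_sa. rewrite <- comm. auto.
  - intro y. eapply Rle_trans. apply (r_bnd _ _ _ HR). apply Rmult_le_compat_l; auto. apply P_norm.
  - intro y. split; [|split]. apply (r_D _ _ _ HR). apply (res_H mu Rr C); auto. apply P_phi. apply (r_right _ _ _ HR).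
Qed.

Lemma quad_from_approx (B : Y -> Y) C (good : R -> Prop) :
  lin B -> sa B -> bndc B C -> forall M0, 0 <= M0 ->
  (forall r, r <> 0 -> M0 < Rabs r -> (forall eps, eps > 0 -> exists x, hnorm x = 1 /\ hnorm (hsub (B x) (hscal r x)) < eps) -> False) ->
  bndc B M0.
Proof.
  intros HL HS HBd M0 HM0 Hno.
  destruct (sup_lemma B C phi HL HS HBd phin) as [Mp [Hp1 [_ Hp3]]].
  destruct (inf_lemma B C phi HL HS HBd phin) as [mm [Hm1 [_ Hm3]]].
  assert (Mp <= M0).
  { apply Rnot_lt_le. intro Hc. apply (Hno Mp). lra. rewrite Rabs_pos_eq; lra. auto. }
  assert (- M0 <= mm).
  { apply Rnot_lt_le. intro Hc. apply (Hno mm). lra. rewrite Rabs_left; lra. auto. }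
  apply quad_bound; auto. intro x. pose proof (Hp1 x). pose proof (Hm1 x). pose proof (nsq_ge0 x).
  apply Rabs_le. split; nra.
Qed.

Lemma surj_lam : forall y, hinner y phi = 0 -> exists x, D x /\ hinner x phi = 0 /\ Lm lam x = y.
Proof.
  intros y Hy.
  destruct Liso as [e0 [He0 Hiso]].
  set (dl := e0 / 3). assert (Hd : 0 < dl) by (unfold dl; lra).
  set (nu := lam + dl).
  assert (Hnu : nu <> lam) by (unfold nu; lra).
  destruct (get_res nu) as [Rr [C HR]].
  { apply Hiso. auto. unfold nu. replace (lam + dl - lam) with dl by ring. rewrite Rabs_pos_eq; unfold dl; lra. }
  destruct (RP_props _ _ _ HR Hnu) as [TL [TS [TB Tspec]]].
  set (M0 := / (e0 - dl)).
  assert (HM0 : 0 < M0) by (unfold M0, dl; apply Rinv_0_lt_compat; lra).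
  assert (TM : bndc (fun y => Rr (P y)) M0).
  { apply (quad_from_approx _ C (fun _ => True) TL TS TB M0 (Rlt_le _ _ HM0)).
    intros r Hr Hrl Hap.
    pose proof (approx_transfer _ nu r Tspec Hr Hap) as HA.
    apply (Happrox_res _ HA). apply Hiso.
    - intro E. rewrite E in HA. apply Happrox_not_lam; auto.
    - unfold nu. replace (lam + dl + / r - lam) with (dl + / r) by ring.
      eapply Rle_lt_trans. apply Rabs_triang. rewrite Rabs_pos_eq by lra. rewrite Rabs_inv.
      assert (/ Rabs r < / M0). { apply Rinv_lt_contravar; auto. apply Rmult_lt_0_compat; lra. }
      unfold M0 in H. rewrite Rinv_inv in H. unfold dl in *. lra. }
  set (Phi := fun x => Rr (hadd y (hscal (lam - nu) x))).
  assert (Hq : 0 <= Rabs (lam - nu) * M0 < 1).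
  { split. apply Rmult_le_pos. apply Rabs_pos. lra. unfold nu, M0, dl.
    replace (lam - (lam + e0/3)) with (- (e0/3)) by ring. rewrite Rabs_Ropp, Rabs_pos_eq by lra.
    replace (e0 / 3 * / (e0 - e0 / 3)) with (1/2) by (field; lra). lra. }
  destruct (banach_fp (fun x => hinner x phi = 0) Phi (Rabs (lam - nu) * M0) hzero closed_H) as [x [Hx1 Hx2]].
  - apply hinner_zero_l.
  - intros x Hx. unfold Phi. apply (res_H nu Rr C); auto. autorewrite with hin. rewrite Hx, Hy. ring.
  - auto.
  - intros a b Ha Hb. unfold Phi.
    rewrite <- (lin_sub Rr _ _ (r_lin _ _ _ HR)).
    replace (hsub (hadd y (hscal (lam - nu) a)) (hadd y (hscal (lam - nu) b))) with
      (hscal (lam - nu) (hsub a b)) by veq.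
    rewrite <- (P_id (hscal (lam - nu) (hsub a b))).
    2: { autorewrite with hin. rewrite Ha, Hb. ring. }
    eapply Rle_trans. apply TM. rewrite hnorm_scal. lra.
  - exists x. split; [|split]; auto.
    rewrite <- Hx2. apply (r_D _ _ _ HR).
    assert (Dx : D x) by (rewrite <- Hx2; apply (r_D _ _ _ HR)).
    replace (Lm lam x) with (hsub (Lm nu x) (hscal (lam - nu) x)) by (unfold Lm; veq).
    rewrite <- Hx2 at 1. unfold Phi. rewrite (r_right _ _ _ HR). veq.
Qed.

Lemma Lm0 x : Lm 0 x = L x. Proof. unfold Lm. veq. Qed.

Lemma L_H x : D x -> hinner x phi = 0 -> hinner (L x) phi = 0.
Proof. intros. rewrite Lphi_inner by auto. rewrite H0. ring. Qed.

Lemma spec_final n : 0 <= n -> -n <= lam <= n ->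
  (forall mu, -n <= mu <= n -> in_spectrum D L mu -> mu = lam) ->
  exists G d, n < d /\ lin G /\ bndc G (/ d) /\
    (forall y, D (G y) /\ hinner (G y) phi = 0 /\ L (G y) = P y) /\
    (forall x, D x -> hinner x phi = 0 -> G (L x) = x) /\
    (forall x, D x -> hinner x phi = 0 -> d * hnorm x <= hnorm (L x)).
Proof.
  intros Hn Hlam Hspec.
  assert (Hab : (forall y, hinner y phi = 0 -> exists x, D x /\ hinner x phi = 0 /\ L x = y) /\
                exists c, 0 < c /\ forall x, D x -> hinner x phi = 0 -> c * hnorm x <= hnorm (L x)).
  { destruct (Req_dec lam 0) as [Z|Z].
    - split.
      + intros y Hy. destruct (surj_lam y Hy) as [x [? [? ?]]]. exists x.
        replace (L x) with (Lm lam x) by (rewrite Z; apply Lm0). auto.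
      + destruct gapL as [c [Hc Hg]]. exists c. split; auto. intros x Dx Hx.
        replace (L x) with (Lm lam x) by (rewrite Z; apply Lm0). auto.
    - assert (R0 : in_resolvent D L 0).
      { apply NNPP. intro Hc. apply Z. symmetry. apply Hspec. lra. exact Hc. }
      destruct (get_res 0 R0) as [Rr [C HR]]. pose proof (res_C _ _ _ HR).
      split.
      + intros y Hy. exists (Rr y). split; [|split]. apply (r_D _ _ _ HR). apply (res_H 0 Rr C); auto.
        rewrite <- Lm0. apply (r_right _ _ _ HR).
      + exists (/ (C + 1)). split. apply Rinv_0_lt_compat; lra. intros x Dx Hx.
        pose proof (r_bnd _ _ _ HR (Lm 0 x)). rewrite (r_left _ _ _ HR x Dx), Lm0 in H0.
        apply (Rmult_le_reg_l (C + 1)). lra. rewrite <- Rmult_assoc, Rinv_r by lra.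
        pose proof (hnorm_ge0 (L x)). nra. }
  destruct Hab as [Hsurj [c [Hc Hbb]]].
  assert (Huniq : forall a b, D a -> D b -> hinner a phi = 0 -> hinner b phi = 0 -> L a = L b -> a = b).
  { intros a b Da Db Ha Hb E. apply hnorm_sub_eq0.
    pose proof (Hbb (hsub a b) (Dsub _ _ Da Db) ltac:(rewrite hinner_sub_l, Ha, Hb; ring)).
    rewrite Lsub, E, hsub_diag, hnorm_zero in H by auto. pose proof (hnorm_ge0 (hsub a b)).
    apply Rle_antisym; auto. apply (Rmult_le_reg_l c); lra. }
  set (G := fun y => epsilon (inhabits hzero) (fun x => D x /\ hinner x phi = 0 /\ L x = P y)).
  assert (HG : forall y, D (G y) /\ hinner (G y) phi = 0 /\ L (G y) = P y).
  { intro y. apply (epsilon_spec (inhabits hzero) (fun x => D x /\ hinner x phi = 0 /\ L x = P y)).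
    apply Hsurj. apply P_phi. }
  assert (GL : lin G).
  { split.
    - intros a b. destruct (HG a) as [A1 [A2 A3]]. destruct (HG b) as [B1 [B2 B3]]. destruct (HG (hadd a b)) as [C1 [C2 C3]].
      apply Huniq; auto. apply Dadd; auto. rewrite hinner_add, A2, B2. ring.
      rewrite C3, Ladd, A3, B3 by auto. destruct P_lin as [P1 _]. apply P1.
    - intros s a. destruct (HG a) as [A1 [A2 A3]]. destruct (HG (hscal s a)) as [C1 [C2 C3]].
      apply Huniq; auto. apply Dscal; auto. rewrite hinner_scal, A2. ring.
      rewrite C3, Lscal, A3 by auto. destruct P_lin as [_ P2]. apply P2. }
  assert (Gleft : forall x, D x -> hinner x phi = 0 -> G (L x) = x).
  { intros x Dx Hx. destruct (HG (L x)) as [A1 [A2 A3]]. apply Huniq; auto. rewrite A3. apply P_id. apply L_H; auto. }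
  assert (GB : bndc G (/ c)).
  { intro y. destruct (HG y) as [A1 [A2 A3]]. pose proof (Hbb _ A1 A2). rewrite A3 in H. pose proof (P_norm y).
    apply (Rmult_le_reg_l c). auto. rewrite <- Rmult_assoc, Rinv_r by lra. lra. }
  assert (GS : sa G).
  { intros a b. destruct (HG a) as [A1 [A2 A3]]. destruct (HG b) as [B1 [B2 B3]].
    assert (E1 : hinner (G a) b = hinner (G a) (P b)).
    { unfold Pproj. rewrite hinner_sub_r, hinner_scal_r, A2. ring. }
    rewrite E1, <- B3, <- Lsym, A3 by auto. unfold Pproj. rewrite hinner_sub_l, hinner_scal, (hinner_sym Y phi (G b)), B2. ring. }
  assert (Gspec0 : forall y, D (G y) /\ hinner (G y) phi = 0 /\ Lm 0 (G y) = P y).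
  { intro y. destruct (HG y) as [A1 [A2 A3]]. rewrite Lm0. auto. }
  assert (Hno : forall r, r <> 0 -> (forall eps, eps > 0 -> exists x, hnorm x = 1 /\ hnorm (hsub (G x) (hscal r x)) < eps) ->
             n * Rabs r < 1).
  { intros r Hr Ha. pose proof (approx_transfer G 0 r Gspec0 Hr Ha) as HA. rewrite Rplus_0_l in HA.
    assert (Hne : / r <> lam) by (intro E; rewrite E in HA; apply Happrox_not_lam; auto).
    assert (Hsp : in_spectrum D L (/ r)) by (apply Happrox_res; auto).
    assert (Hout : ~ (-n <= / r <= n)) by (intro Hin; apply Hne; apply Hspec; auto).
    assert (n < Rabs (/ r)) by (apply Rnot_le_lt; intro; apply Hout; apply Rabs_def2b; auto).
    rewrite Rabs_inv in H. pose proof (Rabs_pos_lt r Hr).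
    apply (Rmult_lt_compat_r (Rabs r)) in H; auto. rewrite Rinv_l in H by lra. lra. }
  destruct (sup_lemma G (/c) phi GL GS GB phin) as [Mp [Hp1 [_ Hp3]]].
  destruct (inf_lemma G (/c) phi GL GS GB phin) as [mm [Hm1 [_ Hm3]]].
  set (Ms := Rmax (Rmax Mp (- mm)) 0).
  assert (HMs0 : 0 <= Ms) by apply Rmax_r.
  assert (HMp : Mp <= Ms) by (unfold Ms; eapply Rle_trans; [apply Rmax_l|apply Rmax_l]).
  assert (HMm : - mm <= Ms) by (unfold Ms; eapply Rle_trans; [apply Rmax_r|apply Rmax_l]).
  assert (HnMs : n * Ms < 1).
  { unfold Ms. apply Rmax_case. apply Rmax_case.
    - destruct (Req_dec Mp 0) as [Z|Z]. rewrite Z; lra.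
      destruct (Rlt_or_le Mp 0). rewrite Rmult_comm. nra.
      pose proof (Hno Mp Z Hp3). rewrite Rabs_pos_eq in H0; lra.
    - destruct (Req_dec mm 0) as [Z|Z]. rewrite Z; lra.
      destruct (Rlt_or_le (-mm) 0). nra.
      pose proof (Hno mm Z Hm3). rewrite Rabs_left in H0 by lra. lra.
    - lra. }
  set (M1 := Ms + (1 - n * Ms) / (n + 1)).
  assert (HM1 : 0 < M1) by (unfold M1; apply Rplus_le_lt_0_compat; auto; apply Rdiv_lt_0_compat; lra).
  assert (HnM1 : n * M1 < 1).
  { unfold M1. assert (n * ((1 - n * Ms) / (n + 1)) < 1 - n * Ms).
    { replace (n * ((1 - n * Ms) / (n + 1))) with ((1 - n * Ms) * (n / (n+1))) by (field; lra).
      rewrite <- (Rmult_1_r (1 - n*Ms)) at 2. apply Rmult_lt_compat_l. lra.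
      apply (Rmult_lt_reg_r (n+1)). lra. unfold Rdiv. rewrite Rmult_assoc, Rinv_l by lra. lra. }
    lra. }
  assert (GM1 : bndc G M1).
  { apply quad_bound; auto. lra. intro x. pose proof (Hp1 x). pose proof (Hm1 x). pose proof (nsq_ge0 x).
    assert (Ms <= M1) by (unfold M1; assert (0 < (1 - n * Ms) / (n+1)) by (apply Rdiv_lt_0_compat; lra); lra).
    apply Rabs_le. split; nra. }
  exists G, (/ M1). split; [|split; [|split; [|split; [|split]]]]; auto.
  - apply (Rmult_lt_reg_r M1). auto. rewrite Rinv_l by lra. lra.
  - rewrite Rinv_inv. auto.
  - intros x Dx Hx. pose proof (GM1 (L x)). rewrite Gleft in H by auto.
    apply (Rmult_le_reg_l M1). auto. rewrite <- Rmult_assoc, Rinv_r by lra. lra.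
Qed.

Variable N : Y -> Y.
Variable n : R.
Variable DF : Y -> Y -> Y.
Hypothesis HH : hypH D L N phi lam n.
Hypothesis HC1 : is_C1 D L (Fmap L N) DF.

Lemma n_nonneg : 0 <= n. Proof. destruct HH as [H _]. auto. Qed.
Lemma N_lip t w1 w2 : hinner w1 phi = 0 -> hinner w2 phi = 0 ->
  hnorm (hsub (P (N (shift phi t w1))) (P (N (shift phi t w2)))) <= n * hnorm (hsub w1 w2).
Proof. destruct HH as [_ [H _]]. apply H. Qed.

Lemma the_spec : exists G d, n < d /\ lin G /\ bndc G (/ d) /\
    (forall y, D (G y) /\ hinner (G y) phi = 0 /\ L (G y) = P y) /\
    (forall x, D x -> hinner x phi = 0 -> G (L x) = x) /\
    (forall x, D x -> hinner x phi = 0 -> d * hnorm x <= hnorm (L x)).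
Proof.
  destruct HH as [Hn [_ [[Hl _] Hs]]]. apply spec_final; auto.
Qed.

Lemma shiftD t w : D w -> D (shift phi t w).
Proof. intro. unfold shift. apply Dadd; auto. apply Dscal, phiD. Qed.

Lemma PF_eq t w : D w -> hinner w phi = 0 ->
  P (Fmap L N (shift phi t w)) = hsub (L w) (P (N (shift phi t w))).
Proof.
  intros Dw Hw. unfold Fmap, shift. rewrite Ladd, Lscal, Lphi by (auto; try apply Dscal; apply phiD).
  rewrite (lin_sub P _ _ P_lin). destruct P_lin as [P1 P2]. rewrite P1, P2, P2.
  rewrite (P_id (L w)) by (apply L_H; auto).
  replace (P phi) with (@hzero Y). veq.
  unfold Pproj. rewrite phii. veq.
Qed.

Definition fspec z t w := D w /\ hinner w phi = 0 /\ P (Fmap L N (shift phi t w)) = z.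

Lemma fiber_exists z t : hinner z phi = 0 -> exists w, fspec z t w.
Proof.
  intro Hz. destruct the_spec as [G [d [Hd [GL [GB [GS [Gl Gbb]]]]]]].
  pose proof n_nonneg as Hn.
  assert (Hd0 : 0 < d) by lra.
  set (Phi := fun w => G (hadd z (P (N (shift phi t w))))).
  destruct (banach_fp (fun x => hinner x phi = 0) Phi (n / d) hzero closed_H) as [w [Hw1 Hw2]].
  - apply hinner_zero_l.
  - intros x Hx. unfold Phi. apply GS.
  - split. apply Rmult_le_pos; auto. apply Rlt_le, Rinv_0_lt_compat; auto.
    apply (Rmult_lt_reg_r d); auto. unfold Rdiv. rewrite Rmult_assoc, Rinv_l by lra. lra.
  - intros a b Ha Hb. unfold Phi. rewrite <- (lin_sub G _ _ GL).
    eapply Rle_trans. apply GB.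
    replace (hsub (hadd z (P (N (shift phi t a)))) (hadd z (P (N (shift phi t b))))) with
      (hsub (P (N (shift phi t a))) (P (N (shift phi t b)))) by veq.
    pose proof (N_lip t a b Ha Hb). pose proof (Rinv_0_lt_compat _ Hd0).
    unfold Rdiv. rewrite (Rmult_comm n), Rmult_assoc. apply Rmult_le_compat_l; lra.
  - exists w. destruct (GS (hadd z (P (N (shift phi t w))))) as [A1 [A2 A3]]. fold (Phi w) in A1, A2, A3.
    rewrite Hw2 in A1, A2, A3. split; [|split]; auto.
    rewrite PF_eq by auto. rewrite A3. rewrite P_id. veq.
    rewrite hinner_add, Hz, P_phi. ring.
Qed.

Lemma PF_bilip t a b : D a -> D b -> hinner a phi = 0 -> hinner b phi = 0 ->
  hnorm (L (hsub a b)) <= hnorm (hsub (P (Fmap L N (shift phi t a))) (P (Fmap L N (shift phi t b)))) + n * hnorm (hsub a b).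
Proof.
  intros Da Db Ha Hb. rewrite !PF_eq by auto. rewrite Lsub by auto.
  replace (L a) with (hadd (hsub (hsub (L a) (P (N (shift phi t a)))) (hsub (L b) (P (N (shift phi t b))))) (hadd (L b) (hsub (P (N (shift phi t a))) (P (N (shift phi t b)))))) at 1 by veq.
  replace (hsub (hadd (hsub (hsub (L a) (P (N (shift phi t a)))) (hsub (L b) (P (N (shift phi t b))))) (hadd (L b) (hsub (P (N (shift phi t a))) (P (N (shift phi t b)))))) (L b))
   with (hadd (hsub (hsub (L a) (P (N (shift phi t a)))) (hsub (L b) (P (N (shift phi t b))))) (hsub (P (N (shift phi t a))) (P (N (shift phi t b))))) by veq.
  eapply Rle_trans. apply hnorm_add. pose proof (N_lip t a b Ha Hb). lra.
Qed.

Lemma fiber_unique z t w1 w2 : fspec z t w1 -> fspec z t w2 -> w1 = w2.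
Proof.
  intros [D1 [H1 E1]] [D2 [H2 E2]].
  destruct the_spec as [G [d [Hd [_ [_ [_ [_ Gbb]]]]]]].
  pose proof (PF_bilip t w1 w2 D1 D2 H1 H2). rewrite E1, E2, hsub_diag, hnorm_zero in H.
  pose proof (Gbb (hsub w1 w2) (Dsub _ _ D1 D2) ltac:(rewrite hinner_sub_l, H1, H2; ring)).
  apply hnorm_sub_eq0. pose proof (hnorm_ge0 (hsub w1 w2)). pose proof n_nonneg.
  apply Rle_antisym; auto. apply (Rmult_le_reg_l (d - n)). lra. nra.
Qed.

Lemma fiber_w_spec z t : hinner z phi = 0 -> fspec z t (fiber_w D L N phi z t).
Proof.
  intro Hz. unfold fiber_w. apply (epsilon_spec (inhabits hzero) (fun w => D w /\ HY phi w /\ P (Fmap L N (shift phi t w)) = z)).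
  apply fiber_exists; auto.
Qed.

Notation gn := (gnorm L).
Lemma gn_ge_norm h : hnorm h <= gn h.
Proof. unfold gnorm, hnorm. apply sqrt_le_1_alt. pose proof (nsq_ge0 (L h)). lra. Qed.
Lemma gn_ge_L h : hnorm (L h) <= gn h.
Proof. unfold gnorm, hnorm. apply sqrt_le_1_alt. pose proof (nsq_ge0 h). lra. Qed.
Lemma gn_ge0 h : 0 <= gn h. Proof. apply sqrt_pos. Qed.
Lemma gn_le h : gn h <= hnorm h + hnorm (L h).
Proof.
  unfold gnorm. rewrite <- (sqrt_Rsqr (hnorm h + hnorm (L h))) by (pose proof (hnorm_ge0 h); pose proof (hnorm_ge0 (L h)); lra).
  apply sqrt_le_1_alt. unfold Rsqr. rewrite <- (hnorm_sq h), <- (hnorm_sq (L h)).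
  pose proof (hnorm_ge0 h); pose proof (hnorm_ge0 (L h)). nra.
Qed.
Lemma gn_scal a h : D h -> gn (hscal a h) = Rabs a * gn h.
Proof.
  intro Dh. unfold gnorm. rewrite Lscal by auto. rewrite !hinner_scal, !hinner_scal_r.
  replace (a * (a * hinner h h) + a * (a * hinner (L h) (L h))) with ((a*a) * (hinner h h + hinner (L h) (L h))) by ring.
  rewrite sqrt_mult_alt by nra. f_equal. replace (a * a) with (Rsqr a) by reflexivity. apply sqrt_Rsqr_abs.
Qed.

Lemma DF_lin u : D u -> linear_on D (DF u). Proof. destruct HC1 as [H _]. intro. apply H; auto. Qed.
Lemma DF_bnd u : D u -> exists C, forall h, D h -> hnorm (DF u h) <= C * gn h.
Proof. destruct HC1 as [H _]. intro. apply H; auto. Qed.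
Lemma DF_diff u : D u -> forall eps, eps > 0 -> exists delta, delta > 0 /\
     forall h, D h -> gn h < delta ->
       hnorm (hsub (hsub (Fmap L N (hadd u h)) (Fmap L N u)) (DF u h)) <= eps * gn h.
Proof. destruct HC1 as [_ [H _]]. auto. Qed.
Lemma DF_sub u a b : D u -> D a -> D b -> DF u (hsub a b) = hsub (DF u a) (DF u b).
Proof.
  intros Du Da Db. destruct (DF_lin u Du) as [A1 A2]. unfold hsub. rewrite !hopp_scal, A1, A2; auto. apply Dscal; auto.
Qed.
Lemma DF_scal u a h : D u -> D h -> DF u (hscal a h) = hscal a (DF u h).
Proof. intros. destruct (DF_lin u H) as [_ A2]. auto. Qed.
Lemma DF_add u a b : D u -> D a -> D b -> DF u (hadd a b) = hadd (DF u a) (DF u b).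
Proof. intros. destruct (DF_lin u H) as [A1 _]. auto. Qed.

Section AtPoint.
Variable t0 : R.
Variable w0 : Y.
Hypothesis Dw0 : D w0.
Hypothesis Hw0 : hinner w0 phi = 0.
Let u0 := shift phi t0 w0.
Lemma Du0 : D u0. Proof. apply shiftD; auto. Qed.

Definition bop (h : Y) : Y := hsub (L h) (P (DF u0 h)).

Lemma bop_lip h : D h -> hinner h phi = 0 -> hnorm (bop h) <= n * hnorm h.
Proof.
  intros Dh Hh. apply Rnot_lt_le. intro Hc. set (bb0 := bop h) in *.
  set (eta := (hnorm bb0 - n * hnorm h) / (2 * (gn h + 1))).
  pose proof (gn_ge0 h) as Hg0.
  assert (Heta : eta > 0) by (unfold eta; apply Rdiv_lt_0_compat; lra).
  destruct (DF_diff u0 Du0 eta Heta) as [delta [Hdel Hdiff]].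
  set (s := delta / (2 * (gn h + 1))).
  assert (Hs : 0 < s) by (unfold s; apply Rdiv_lt_0_compat; lra).
  assert (Dsh : D (hscal s h)) by (apply Dscal; auto).
  assert (Hgs : gn (hscal s h) < delta).
  { rewrite gn_scal, Rabs_pos_eq by (auto; lra). unfold s.
    apply (Rmult_lt_reg_r (2 * (gn h + 1))). lra.
    replace (delta / (2 * (gn h + 1)) * gn h * (2 * (gn h + 1))) with (delta * gn h) by (field; lra). nra. }
  specialize (Hdiff _ Dsh Hgs). rewrite gn_scal, Rabs_pos_eq in Hdiff by (auto; lra).
  set (rem := hsub (hsub (Fmap L N (hadd u0 (hscal s h))) (Fmap L N u0)) (DF u0 (hscal s h))) in *.
  assert (Esh : hadd u0 (hscal s h) = shift phi t0 (hadd w0 (hscal s h))) by (unfold u0, shift; veq).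
  assert (Hlip := N_lip t0 (hadd w0 (hscal s h)) w0 ltac:(rewrite hinner_add, hinner_scal, Hw0, Hh; ring) Hw0).
  rewrite <- Esh in Hlip. fold u0 in Hlip.
  replace (hsub (hadd w0 (hscal s h)) w0) with (hscal s h) in Hlip by veq.
  rewrite hnorm_scal, Rabs_pos_eq in Hlip by lra.
  assert (Eb : hscal s bb0 = hadd (P rem) (hsub (P (N (hadd u0 (hscal s h)))) (P (N u0)))).
  { unfold bb0, bop, rem, Fmap. rewrite Ladd by (auto using Du0). rewrite Lscal by auto.
    rewrite DF_scal by (auto using Du0).
    destruct P_lin as [P1 P2]. rewrite !(lin_sub P _ _ P_lin), !P1, !P2.
    rewrite (P_id (L h)) by (apply L_H; auto). veq. }
  assert (B1 : s * hnorm bb0 <= eta * (s * gn h) + n * (s * hnorm h)).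
  { rewrite <- (Rabs_pos_eq s) at 1 by lra. rewrite <- hnorm_scal, Eb.
    eapply Rle_trans. apply hnorm_add. pose proof (P_norm rem). lra. }
  assert (B2 : hnorm bb0 <= eta * gn h + n * hnorm h).
  { apply (Rmult_le_reg_l s); auto. lra. }
  assert (B3 : eta * gn h <= (hnorm bb0 - n * hnorm h) / 2).
  { unfold eta. unfold Rdiv. rewrite Rinv_mult.
    replace ((hnorm bb0 - n * hnorm h) * (/ 2 * / (gn h + 1)) * gn h) with
      ((hnorm bb0 - n * hnorm h) * / 2 * (gn h / (gn h + 1))) by (field; lra).
    rewrite <- (Rmult_1_r ((hnorm bb0 - n * hnorm h) * / 2)) at 2.
    apply Rmult_le_compat_l. lra. apply (Rmult_le_reg_r (gn h + 1)). lra. unfold Rdiv.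
    rewrite Rmult_assoc, Rinv_l by lra. lra. }
  lra.
Qed.

Lemma bop_D h : D h -> hsub (L h) (bop h) = P (DF u0 h).
Proof. intro. unfold bop. veq. Qed.

Lemma A_bb : exists Cg, 0 < Cg /\ forall h, D h -> hinner h phi = 0 -> gn h <= Cg * hnorm (P (DF u0 h)).
Proof.
  destruct the_spec as [G [d [Hd [_ [_ [_ [_ Gbb]]]]]]]. pose proof n_nonneg as Hn.
  exists (2 / (d - n) * (1 + n) + 1). split.
  { assert (0 < 2 / (d - n) * (1 + n)) by (apply Rmult_lt_0_compat; [apply Rdiv_lt_0_compat|]; lra). lra. }
  intros h Dh Hh. rewrite <- bop_D by auto.
  pose proof (bop_lip h Dh Hh). pose proof (Gbb h Dh Hh).
  pose proof (hnorm_rev (L h) (bop h)). pose proof (gn_le h).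
  set (a := hnorm (hsub (L h) (bop h))) in *.
  assert (Ha0 : 0 <= a) by apply hnorm_ge0.
  assert (H4 : (d - n) * hnorm h <= a) by lra.
  assert (H5 : hnorm h <= a / (d - n)).
  { apply (Rmult_le_reg_l (d - n)). lra. replace ((d - n) * (a / (d - n))) with a by (field; lra). lra. }
  assert (H6 : hnorm (L h) <= a + n * hnorm h) by lra.
  assert (H7 : n * hnorm h <= n * (a / (d - n))) by (apply Rmult_le_compat_l; auto).
  assert (0 <= a / (d - n)) by (apply Rmult_le_pos; auto; apply Rlt_le, Rinv_0_lt_compat; lra).
  replace ((2 / (d - n) * (1 + n) + 1) * a) with (2 * (a / (d - n)) + 2 * n * (a / (d - n)) + a) by (field; lra).
  nra.
Qed.

Lemma A_surj y : hinner y phi = 0 -> exists h, D h /\ hinner h phi = 0 /\ P (DF u0 h) = y.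
Proof.
  intro Hy. destruct the_spec as [G [d [Hd [GL [GB [GS [Gl Gbb]]]]]]]. pose proof n_nonneg as Hn.
  assert (Hd0 : 0 < d) by lra.
  assert (bopH : forall x, D x -> hinner x phi = 0 -> hinner (bop x) phi = 0).
  { intros x Dx Hx. unfold bop. rewrite hinner_sub_l, P_phi, L_H by auto. ring. }
  assert (bop_sub : forall a b, D a -> D b -> bop (hsub a b) = hsub (bop a) (bop b)).
  { intros a b Da Db. unfold bop. rewrite Lsub, DF_sub by (auto using Du0). rewrite (lin_sub P _ _ P_lin). veq. }
  set (Psi := fun k => hadd y (bop (G k))).
  destruct (banach_fp (fun x => hinner x phi = 0) Psi (n / d) hzero closed_H) as [k [Hk1 Hk2]].
  - apply hinner_zero_l.
  - intros x Hx. unfold Psi. destruct (GS x) as [A1 [A2 A3]]. rewrite hinner_add, Hy, bopH; auto. ring.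
  - split. apply Rmult_le_pos; auto. apply Rlt_le, Rinv_0_lt_compat; auto.
    apply (Rmult_lt_reg_r d); auto. unfold Rdiv. rewrite Rmult_assoc, Rinv_l by lra. lra.
  - intros a b Ha Hb. unfold Psi.
    replace (hsub (hadd y (bop (G a))) (hadd y (bop (G b)))) with (hsub (bop (G a)) (bop (G b))) by veq.
    destruct (GS a) as [A1 [A2 _]]. destruct (GS b) as [B1 [B2 _]].
    rewrite <- bop_sub by auto. rewrite <- (lin_sub G _ _ GL).
    destruct (GS (hsub a b)) as [C1 [C2 _]].
    eapply Rle_trans. apply bop_lip; auto. pose proof (GB (hsub a b)).
    unfold Rdiv. rewrite (Rmult_comm n (/ d)), Rmult_assoc. rewrite (Rmult_comm (/d)).
    rewrite Rmult_assoc. apply Rmult_le_compat_l; auto. lra.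
  - destruct (GS k) as [A1 [A2 A3]]. exists (G k). split; [|split]; auto.
    rewrite <- bop_D by auto. rewrite A3, P_id by auto. rewrite <- Hk2 at 1. unfold Psi. veq.
Qed.

End AtPoint.

Lemma gn_add2 a b : D a -> D b -> gn (hadd a b) <= 2 * (gn a + gn b).
Proof.
  intros Da Db. eapply Rle_trans. apply gn_le. rewrite Ladd by auto.
  pose proof (hnorm_add a b). pose proof (hnorm_add (L a) (L b)).
  pose proof (gn_ge_norm a). pose proof (gn_ge_norm b). pose proof (gn_ge_L a). pose proof (gn_ge_L b). lra.
Qed.
Lemma gn_sub2 a b : D a -> D b -> gn (hsub a b) <= 2 * (gn a + gn b).
Proof.
  intros Da Db. unfold hsub. rewrite hopp_scal. eapply Rle_trans. apply gn_add2; auto. apply Dscal; auto.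
  rewrite gn_scal by auto. replace (Rabs (-1)) with 1. lra. rewrite Rabs_left by lra. ring.
Qed.
Lemma gn_zero_eq h : gn h <= 0 -> h = hzero.
Proof. intro. apply hnorm_zero_eq. pose proof (gn_ge_norm h). pose proof (hnorm_ge0 h). lra. Qed.

Lemma decomp y : y = hadd (P y) (hscal (hinner y phi) phi).
Proof. unfold Pproj. veq. Qed.

Section Deriv.
Variable z0 : Y.
Hypothesis Hz0 : hinner z0 phi = 0.
Variable t0 : R.
Let W t := fiber_w D L N phi z0 t.
Let w0 := W t0.
Let u0 := shift phi t0 w0.

Lemma Wspec t : fspec z0 t (W t). Proof. apply fiber_w_spec; auto. Qed.
Lemma Dw0 : D w0. Proof. apply (Wspec t0). Qed.
Lemma Hw0 : hinner w0 phi = 0. Proof. apply (Wspec t0). Qed.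
Lemma Du0' : D u0. Proof. apply shiftD, Dw0. Qed.

Lemma cont_bound : exists K1 d1, 0 <= K1 /\ 0 < d1 /\
  forall t, Rabs (t - t0) < d1 -> gn (hsub (W t) w0) <= K1 * Rabs (t - t0).
Proof.
  destruct the_spec as [G [d [Hd [_ [_ [_ [_ Gbb]]]]]]]. pose proof n_nonneg as Hn.
  destruct (DF_diff u0 Du0' 1 ltac:(lra)) as [delta [Hdel Hdiff]].
  pose proof (gn_ge0 phi) as Hgp.
  set (Kb := 1 + (1 + n) / (d - n)).
  assert (HKb : 0 < Kb) by (unfold Kb; assert (0 < (1+n)/(d-n)) by (apply Rdiv_lt_0_compat; lra); lra).
  exists (Kb * (hnorm (DF u0 phi) + gn phi)), (delta / (gn phi + 1)).
  split. apply Rmult_le_pos. lra. pose proof (hnorm_ge0 (DF u0 phi)). lra.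
  split. apply Rdiv_lt_0_compat; lra.
  intros t Ht. set (Dl := t - t0).
  destruct (Wspec t) as [Da [Ha Ea]]. pose proof Dw0 as Db. pose proof Hw0 as Hb.
  destruct (Wspec t0) as [_ [_ Eb]]. fold w0 in Eb.
  pose proof (PF_bilip t (W t) w0 Da Db Ha Hb) as B. rewrite Ea in B.
  assert (Es : shift phi t w0 = hadd u0 (hscal Dl phi)) by (unfold u0, shift, Dl; veq).
  rewrite Es in B.
  set (rho := hnorm (hsub (Fmap L N (hadd u0 (hscal Dl phi))) (Fmap L N u0))).
  assert (B1 : hnorm (hsub z0 (P (Fmap L N (hadd u0 (hscal Dl phi))))) <= rho).
  { rewrite <- Eb, <- (lin_sub P _ _ P_lin). eapply Rle_trans. apply P_norm. unfold rho, u0. rewrite hnorm_sub_sym. apply Rle_refl. }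
  assert (Dp : D (hscal Dl phi)) by (apply Dscal, phiD).
  assert (Hg : gn (hscal Dl phi) < delta).
  { rewrite gn_scal by apply phiD. apply (Rmult_lt_reg_r (/ (gn phi + 1))). apply Rinv_0_lt_compat; lra.
    apply Rle_lt_trans with (Rabs Dl). 
    { rewrite Rmult_assoc. rewrite <- (Rmult_1_r (Rabs Dl)) at 2. apply Rmult_le_compat_l. apply Rabs_pos.
      apply (Rmult_le_reg_r (gn phi + 1)). lra. rewrite Rmult_assoc, Rinv_l by lra. lra. }
    auto. }
  specialize (Hdiff _ Dp Hg). rewrite gn_scal in Hdiff by apply phiD.
  assert (B2 : rho <= Rabs Dl * (hnorm (DF u0 phi) + gn phi)).
  { unfold rho. pose proof (hnorm_add (hsub (hsub (Fmap L N (hadd u0 (hscal Dl phi))) (Fmap L N u0)) (DF u0 (hscal Dl phi))) (DF u0 (hscal Dl phi))).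
    replace (hadd (hsub (hsub (Fmap L N (hadd u0 (hscal Dl phi))) (Fmap L N u0)) (DF u0 (hscal Dl phi))) (DF u0 (hscal Dl phi)))
      with (hsub (Fmap L N (hadd u0 (hscal Dl phi))) (Fmap L N u0)) in H by veq.
    rewrite DF_scal in H, Hdiff by (apply Du0' || apply phiD). rewrite (hnorm_scal Dl (DF u0 phi)) in H. lra. }
  pose proof (Gbb (hsub (W t) w0) (Dsub _ _ Da Db) ltac:(rewrite hinner_sub_l, Ha, Hb; ring)) as B3.
  assert (B4 : hnorm (hsub (W t) w0) <= rho / (d - n)).
  { apply (Rmult_le_reg_l (d - n)). lra. replace ((d - n) * (rho / (d - n))) with rho by (field; lra). lra. }
  pose proof (gn_le (hsub (W t) w0)).
  assert (B5 : n * hnorm (hsub (W t) w0) <= n * (rho / (d - n))) by (apply Rmult_le_compat_l; auto).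
  assert (B6 : gn (hsub (W t) w0) <= Kb * rho).
  { unfold Kb. replace ((1 + (1 + n) / (d - n)) * rho) with (rho + rho / (d - n) + n * (rho / (d - n))) by (field; lra). lra. }
  eapply Rle_trans. apply B6. rewrite Rmult_assoc. apply Rmult_le_compat_l. lra. fold Dl. lra.
Qed.

Lemma deriv_height : exists w', D w' /\ hinner w' phi = 0 /\ P (DF u0 w') = hopp (P (DF u0 phi)) /\
  derivable_pt_lim (fun t => height L N phi (fiber_u D L N phi z0 t)) t0 (hinner (DF u0 (hadd w' phi)) phi).
Proof.
  pose proof Dw0 as Dw. pose proof Hw0 as Hw. pose proof Du0' as Du.
  destruct (A_surj t0 w0 Dw Hw (hopp (P (DF u0 phi)))) as [w' [Dw' [Hw' Ew']]].
  { rewrite hinner_opp_l, P_phi. ring. }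
  change (shift phi t0 w0) with u0 in Ew'.
  exists w'. split; [|split; [|split]]; auto.
  destruct (A_bb t0 w0 Dw Hw) as [Cg [HCg Hbb]]. change (shift phi t0 w0) with u0 in Hbb.
  destruct (DF_bnd u0 Du) as [CD HCD].
  destruct cont_bound as [K1 [d1 [HK1 [Hd1 Hcb]]]].
  set (CDa := Rabs CD). assert (HCDa : 0 <= CDa) by apply Rabs_pos.
  assert (HCD' : forall h, D h -> hnorm (DF u0 h) <= CDa * gn h).
  { intros h Dh. eapply Rle_trans. apply HCD; auto. apply Rmult_le_compat_r. apply gn_ge0. apply Rle_abs. }
  set (K2 := K1 + gn phi). assert (HK2 : 0 <= K2) by (unfold K2; pose proof (gn_ge0 phi); lra).
  intros eps Heps.
  set (eta := eps / (4 * (K2 + 1) * (CDa * Cg + 1))).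
  assert (Heta : eta > 0) by (unfold eta; apply Rdiv_lt_0_compat; auto; apply Rmult_lt_0_compat; nra).
  destruct (DF_diff u0 Du eta Heta) as [delta [Hdel Hdiff]].
  set (ds := Rmin d1 (delta / (2 * K2 + 1))).
  assert (Hds : 0 < ds) by (apply Rmin_pos; auto; apply Rdiv_lt_0_compat; lra).
  exists (mkposreal ds Hds). intros Dl HDl0 HDl. simpl in HDl.
  assert (HDl1 : Rabs Dl < d1) by (eapply Rlt_le_trans; [apply HDl|apply Rmin_l]).
  assert (HDl2 : Rabs Dl < delta / (2 * K2 + 1)) by (eapply Rlt_le_trans; [apply HDl|apply Rmin_r]).
  assert (HDa : 0 < Rabs Dl) by (apply Rabs_pos_lt; auto).
  set (t := t0 + Dl).
  destruct (Wspec t) as [Dt [Ht Et]].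
  pose proof (Hcb t) as Hc. replace (t - t0) with Dl in Hc by (unfold t; ring). specialize (Hc HDl1).
  set (v := hadd (hsub (W t) w0) (hscal Dl phi)).
  assert (Dv : D v) by (apply Dadd; [apply Dsub; auto| apply Dscal, phiD]).
  assert (Hgv : gn v <= 2 * K2 * Rabs Dl).
  { eapply Rle_trans. apply gn_add2. apply Dsub; auto. apply Dscal, phiD. rewrite gn_scal by apply phiD.
    unfold K2. lra. }
  assert (Hgv2 : gn v < delta).
  { apply Rle_lt_trans with ((2 * K2 + 1) * Rabs Dl). nra.
    apply (Rmult_lt_reg_r (/ (2 * K2 + 1))). apply Rinv_0_lt_compat; lra.
    replace ((2 * K2 + 1) * Rabs Dl * / (2 * K2 + 1)) with (Rabs Dl) by (field; lra). auto. }
  specialize (Hdiff v Dv Hgv2).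
  assert (EU : fiber_u D L N phi z0 t = hadd u0 v) by (unfold fiber_u, u0, v, shift, t; fold (W (t0 + Dl)); veq).
  set (r := hsub (hsub (Fmap L N (hadd u0 v)) (Fmap L N u0)) (DF u0 v)) in *.
  assert (Pr : P (DF u0 v) = hopp (P r)).
  { unfold r. rewrite !(lin_sub P _ _ P_lin). rewrite <- EU. unfold fiber_u. fold (W t). rewrite Et.
    destruct (Wspec t0) as [_ [_ E0]]. fold w0 in E0. fold u0 in E0. rewrite E0. veq. }
  set (e := hsub (hsub (W t) w0) (hscal Dl w')).
  assert (De : D e) by (apply Dsub; [apply Dsub; auto|apply Dscal; auto]).
  assert (He : hinner e phi = 0) by (unfold e; rewrite !hinner_sub_l, hinner_scal, Ht, Hw, Hw'; ring).
  assert (Ev : v = hadd (hscal Dl (hadd w' phi)) e) by (unfold v, e; veq).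
  assert (Pe : P (DF u0 e) = hopp (P r)).
  { rewrite <- Pr. unfold e, v. rewrite DF_add, !DF_sub, !DF_scal by (auto; try apply Dsub; try apply Dscal; auto; apply phiD).
    repeat rewrite (lin_sub P _ _ P_lin). destruct P_lin as [P1 P2]. rewrite !P1, !P2.
    repeat rewrite (lin_sub P _ _ P_lin). rewrite Ew'. veq. }
  assert (Hge : gn e <= Cg * hnorm r) by (eapply Rle_trans; [apply Hbb; auto|]; rewrite Pe, hnorm_opp;
     apply Rmult_le_compat_l; [lra| apply P_norm]).
  assert (Hdiffc : height L N phi (fiber_u D L N phi z0 t) - height L N phi (fiber_u D L N phi z0 t0)
     - Dl * hinner (DF u0 (hadd w' phi)) phi = hinner r phi + hinner (DF u0 e) phi).
  { rewrite EU. unfold height. unfold fiber_u. fold (W t0). fold w0. fold u0.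
    assert (EDv : DF u0 v = hadd (hscal Dl (DF u0 (hadd w' phi))) (DF u0 e)).
    { rewrite Ev at 1. rewrite DF_add, DF_scal by (auto; try apply Dscal; try apply Dadd; auto; apply phiD). auto. }
    unfold r. autorewrite with hin. rewrite EDv. autorewrite with hin. ring. }
  assert (Hrr : hnorm r <= eta * (2 * K2 * Rabs Dl)).
  { eapply Rle_trans. apply Hdiff. apply Rmult_le_compat_l; lra. }
  assert (Hb1 : Rabs (hinner r phi + hinner (DF u0 e) phi) <= (1 + CDa * Cg) * hnorm r).
  { eapply Rle_trans. apply Rabs_triang. pose proof (CS r phi). pose proof (CS (DF u0 e) phi). rewrite phin in *.
    pose proof (HCD' e De). pose proof (hnorm_ge0 r).
    assert (CDa * gn e <= CDa * (Cg * hnorm r)) by (apply Rmult_le_compat_l; auto). nra. }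
  replace ((height L N phi (fiber_u D L N phi z0 t) - height L N phi (fiber_u D L N phi z0 t0)) / Dl -
      hinner (DF u0 (hadd w' phi)) phi) with
     ((height L N phi (fiber_u D L N phi z0 t) - height L N phi (fiber_u D L N phi z0 t0)
     - Dl * hinner (DF u0 (hadd w' phi)) phi) / Dl) by (field; auto).
  rewrite Hdiffc. unfold Rdiv. rewrite Rabs_mult, Rabs_inv.
  apply (Rmult_lt_reg_r (Rabs Dl)). auto. rewrite Rmult_assoc, Rinv_l, Rmult_1_r by lra.
  eapply Rle_lt_trans. apply Hb1.
  apply Rle_lt_trans with ((1 + CDa * Cg) * (eta * (2 * K2 * Rabs Dl))).
  apply Rmult_le_compat_l. nra. auto.
  unfold eta. replace ((1 + CDa * Cg) * (eps / (4 * (K2 + 1) * (CDa * Cg + 1)) * (2 * K2 * Rabs Dl))) with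
    (eps * Rabs Dl * (K2 / (2 * (K2 + 1)))) by (field; nra).
  rewrite <- (Rmult_1_r (eps * Rabs Dl)) at 2. apply Rmult_lt_compat_l. nra.
  apply (Rmult_lt_reg_r (2 * (K2 + 1))). lra. unfold Rdiv. rewrite Rmult_assoc, Rinv_l by lra. lra.
Qed.

Lemma P_phi0 : P phi = hzero. Proof. unfold Pproj. rewrite phii. veq. Qed.
Lemma DF_zero u : D u -> DF u hzero = hzero.
Proof. intro Du. rewrite <- (hscal_zero_l hzero), DF_scal by (auto; apply D0). rewrite !hscal_zero_l. auto. Qed.

Lemma main_equiv :
  (~ invertible_op D L (DF (fiber_u D L N phi z0 t0)) <->
     derivable_pt_lim (fun t => height L N phi (fiber_u D L N phi z0 t)) t0 0).
Proof.
  change (fiber_u D L N phi z0 t0) with u0.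
  pose proof Dw0 as Dw. pose proof Hw0 as Hw. pose proof Du0' as Du.
  destruct deriv_height as [w' [Dw' [Hw' [Ew' Hder]]]].
  set (v0 := hadd w' phi) in *. set (c := hinner (DF u0 v0) phi) in *.
  assert (Dv0 : D v0) by (apply Dadd; auto; apply phiD).
  assert (Hv0 : hinner v0 phi = 1) by (unfold v0; rewrite hinner_add, Hw', phii; ring).
  assert (PDv0 : P (DF u0 v0) = hzero).
  { unfold v0. rewrite DF_add by (auto; apply phiD). destruct P_lin as [P1 _]. rewrite P1, Ew'. veq. }
  assert (DFv0 : DF u0 v0 = hscal c phi).
  { rewrite (decomp (DF u0 v0)) at 1. rewrite PDv0. fold c. veq. }
  assert (Hiff : ~ invertible_op D L (DF u0) <-> c = 0).
  { split.
    - intro Hni. apply NNPP. intro Hc. apply Hni.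
      destruct (A_bb t0 w0 Dw Hw) as [Cg [HCg Hbb]]. change (shift phi t0 w0) with u0 in Hbb.
      destruct (DF_bnd u0 Du) as [CD HCD].
      set (CDa := Rabs CD). assert (HCDa : 0 <= CDa) by apply Rabs_pos.
      assert (HCD' : forall h, D h -> hnorm (DF u0 h) <= CDa * gn h).
      { intros h Dh. eapply Rle_trans. apply HCD; auto. apply Rmult_le_compat_r. apply gn_ge0. apply Rle_abs. }
      set (hy := fun y => epsilon (inhabits hzero) (fun h => D h /\ hinner h phi = 0 /\ P (DF u0 h) = P y)).
      assert (Hhy : forall y, D (hy y) /\ hinner (hy y) phi = 0 /\ P (DF u0 (hy y)) = P y).
      { intro y. apply (epsilon_spec (inhabits hzero) (fun h => D h /\ hinner h phi = 0 /\ P (DF u0 h) = P y)).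
        apply (A_surj t0 w0 Dw Hw). apply P_phi. }
      set (Gi := fun y => hadd (hy y) (hscal ((hinner y phi - hinner (DF u0 (hy y)) phi) / c) v0)).
      assert (inj : forall x1 x2, D x1 -> D x2 -> DF u0 x1 = DF u0 x2 -> x1 = x2).
      { intros x1 x2 D1 D2 E. set (x := hsub x1 x2).
        assert (Dx : D x) by (apply Dsub; auto).
        assert (DFx : DF u0 x = hzero) by (unfold x; rewrite DF_sub, E by auto; apply hsub_diag).
        set (x' := hsub x (hscal (hinner x phi) v0)).
        assert (Dx' : D x') by (apply Dsub; auto; apply Dscal; auto).
        assert (Hx' : hinner x' phi = 0) by (unfold x'; rewrite hinner_sub_l, hinner_scal, Hv0; ring).
        assert (DFx' : DF u0 x' = hscal (- (hinner x phi * c)) phi).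
        { unfold x'. rewrite DF_sub, DF_scal, DFx, DFv0 by (auto; apply Dscal; auto). veq. }
        assert (Ex' : x' = hzero).
        { apply gn_zero_eq. eapply Rle_trans. apply Hbb; auto. rewrite DFx'. destruct P_lin as [_ P2].
          rewrite P2, P_phi0, hnorm_scal, hnorm_zero. lra. }
        assert (Hxc : hinner x phi * c = 0).
        { rewrite Ex', DF_zero in DFx' by auto. assert (G := f_equal (fun v => hinner v phi) DFx'). simpl in G.
          rewrite hinner_zero_l, hinner_scal, phii in G. lra. }
        assert (Hx0 : hinner x phi = 0) by (apply Rmult_integral in Hxc as [?|?]; auto; contradiction).
        apply hsub_eq0. fold x. unfold x' in Ex'. rewrite Hx0 in Ex'. rewrite <- Ex'. veq. }
      exists Gi. split; [|split].
      + intro y. destruct (Hhy y) as [A1 [A2 A3]]. split.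
        * unfold Gi. apply Dadd; auto. apply Dscal; auto.
        * unfold Gi. rewrite DF_add, DF_scal, DFv0 by (auto; apply Dscal; auto).
          assert (E1 : DF u0 (hy y) = hadd (P y) (hscal (hinner (DF u0 (hy y)) phi) phi)).
          { rewrite (decomp (DF u0 (hy y))) at 1. rewrite A3. auto. }
          rewrite E1 at 1. unfold Pproj. apply hext. intro z. autorewrite with hin. field. auto.
      + intros x Dx. apply inj; auto.
        * unfold Gi. destruct (Hhy (DF u0 x)) as [A1 _]. apply Dadd; auto. apply Dscal; auto.
        * destruct (Hhy (DF u0 x)) as [A1 [A2 A3]]. unfold Gi. rewrite DF_add, DF_scal, DFv0 by (auto; apply Dscal; auto).
          assert (E1 : DF u0 (hy (DF u0 x)) = hadd (P (DF u0 x)) (hscal (hinner (DF u0 (hy (DF u0 x))) phi) phi)).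
          { rewrite (decomp (DF u0 (hy (DF u0 x)))) at 1. rewrite A3. auto. }
          rewrite E1 at 1. unfold Pproj. apply hext. intro z. autorewrite with hin. field. auto.
      + assert (Hca : 0 < Rabs c) by (apply Rabs_pos_lt; auto).
        exists (2 * (Cg + (1 + CDa * Cg) / Rabs c * gn v0)). intro y.
        destruct (Hhy y) as [A1 [A2 A3]].
        unfold Gi. eapply Rle_trans. apply gn_add2; auto. apply Dscal; auto.
        rewrite gn_scal by auto.
        pose proof (Hbb (hy y) A1 A2) as B1. rewrite A3 in B1. pose proof (P_norm y).
        assert (B2 : gn (hy y) <= Cg * hnorm y) by (eapply Rle_trans; [apply B1|]; apply Rmult_le_compat_l; lra).
        assert (B3 : Rabs (hinner (DF u0 (hy y)) phi) <= CDa * (Cg * hnorm y)).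
        { eapply Rle_trans. apply CS. rewrite phin, Rmult_1_r. eapply Rle_trans. apply HCD'; auto.
          apply Rmult_le_compat_l; auto. }
        assert (B4 : Rabs (hinner y phi) <= hnorm y) by (eapply Rle_trans; [apply CS|]; rewrite phin; lra).
        assert (B5 : Rabs ((hinner y phi - hinner (DF u0 (hy y)) phi) / c) <= (1 + CDa * Cg) / Rabs c * hnorm y).
        { unfold Rdiv. rewrite Rabs_mult, Rabs_inv. 
          replace ((1 + CDa * Cg) * / Rabs c * hnorm y) with (((1 + CDa * Cg) * hnorm y) * / Rabs c) by ring.
          apply Rmult_le_compat_r. apply Rlt_le, Rinv_0_lt_compat; auto.
          eapply Rle_trans. apply Rabs_triang. rewrite Rabs_Ropp. lra. }
        pose proof (gn_ge0 v0). pose proof (hnorm_ge0 y).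
        assert (Rabs ((hinner y phi - hinner (DF u0 (hy y)) phi) / c) * gn v0 <= (1 + CDa * Cg) / Rabs c * hnorm y * gn v0)
          by (apply Rmult_le_compat_r; auto). nra.
    - intros Hc [G' [G1 [G2 _]]].
      assert (E0 : DF u0 v0 = DF u0 hzero) by (rewrite DFv0, DF_zero, Hc by auto; apply hscal_zero_l).
      pose proof (G2 v0 Dv0). pose proof (G2 hzero D0). rewrite E0 in H. rewrite H in H0.
      rewrite H0, hinner_zero_l in Hv0. lra. }
  rewrite Hiff. split.
  - intro Hc. rewrite <- Hc. auto.
  - intro H0. exact (uniqueness_limite _ t0 c 0 Hder H0).
Qed.

End Deriv.

End Spec.

Theorem mainTheorem5 (Y : RHilbert) (D : Y -> Prop) (L N : Y -> Y)
    (lam_p : R) (phi_p : Y) (n : R) (DF : Y -> Y -> Y) (z0 : Y) (t0 : R) :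
  self_adjoint D L ->
  simple_isolated_eigenvalue D L lam_p phi_p ->
  hypH D L N phi_p lam_p n ->
  is_C1 D L (Fmap L N) DF ->
  HY phi_p z0 ->
  (~ invertible_op D L (DF (fiber_u D L N phi_p z0 t0)) <->
     derivable_pt_lim (fun t => height L N phi_p (fiber_u D L N phi_p z0 t)) t0 0) /\
  (~ invertible_op D L (DF (fiber_u D L N phi_p z0 t0)) <->
     derivable_pt_lim (fun t => adapted_height D L N phi_p z0 t) t0 0).
Proof.
  intros SA SE HH HC Hz.
  pose proof (main_equiv D L lam_p phi_p SA SE N n DF HH HC z0 Hz t0) as H.
  split. exact H. exact H.
Qed.
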